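(* Let $\{r_g\}_{g\in\mathbb{Z}_+}$ be i.i.d. uniform on $[0,1)$, so that $R^N_g=\lfloor Nr_g\rfloor+1$ is uniform on $\{1,\dots,N\}$, and consider the corresponding Wright–Fisher model. Then $C_N:=\sum_{i=1}^N\frac1i\mathbb{P}(R^N_1=i)\sim\frac{\log N}{N}$, and for each $n\in\mathbb{N}$ the ancestral process $\{\Pi^{N,n}_{\lfloor tN/\log N\rfloor}\}_{t\ge0}$ converges, in the sense of finite-dimensional distributions, to the Kingman coalescent restricted to $[n]$ started from the partition into singletons.
   Context: Wright–Fisher model with varying population size: given population sizes $R^N_g\in\{1,\dots,N\}$, each individual of generation $g$ chooses its parent uniformly at random among the individuals of the neighbouring (parental) generation, independently. For a sample of $n$ distinct individuals from a generation of size at least $n$ (labelled $1,\dots,n$), $\Pi^{N,n}_g$ denotes the partition of $[n]$ in which $i$ and $j$ are in the same block iff individuals $i$ and $j$ have a common ancestor $g$ generations back. The Kingman coalescent restricted to $[n]$ is the partition-valued Markov chain in which each pair of blocks merges at rate 1. *)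

(* Defs.v *)
From Stdlib Require Import Reals List Arith ZArith.
Import ListNotations.
Open Scope R_scope.

Definition sumR {A : Type} (l : list A) (h : A -> R) : R :=
  fold_right (fun a s => h a + s) 0 l.

(* all lists of length a with entries in {0,...,b-1}
   (= all functions [a] -> [b], 0-indexed) *)
Fixpoint seqs (b a : nat) : list (list nat) :=
  match a with
  | O => [[]]
  | S a' => flat_map (fun x => map (cons x) (seqs b a')) (seq 0 b)
  end.

Fixpoint leqb (l1 l2 : list nat) : bool :=
  match l1, l2 with
  | [], [] => true
  | x :: l1', y :: l2' => andb (Nat.eqb x y) (leqb l1' l2')
  | _, _ => false
  end.

Fixpoint pos (x : nat) (l : list nat) : option nat :=
  match l with
  | [] => None
  | y :: l' => if Nat.eqb x y then Some 0%nat
               else match pos x l' with Some k => Some (S k) | None => None end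
  end.

(* canonical labelling: element i gets the index (in order of first
   appearance) of its label; two positions get the same value iff they
   had the same label. *)
Fixpoint canon_aux (seen : list nat) (l : list nat) : list nat :=
  match l with
  | [] => []
  | x :: l' =>
      match pos x seen with
      | Some k => k :: canon_aux seen l'
      | None => length seen :: canon_aux (seen ++ [x]) l'
      end
  end.
Definition canon (l : list nat) : list nat := canon_aux [] l.

(* the partitions of [n] = {0,..,n-1}, each represented by its restricted
   growth string: i and j are in the same block iff c_i = c_j *)
Definition parts (n : nat) : list (list nat) :=
  filter (fun c => leqb (canon c) c) (seqs n n).

Definition singletons (n : nat) : list nat := seq 0 n.

Definition nblocks (c : list nat) : nat := length (nodup Nat.eq_dec c).

Definition merge (c : list nat) (a b : nat) : list nat :=
  canon (map (fun x => if Nat.eqb x b then a else x) c).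

(* generator: each (unordered) pair of blocks {a,b} (a<b) merges at rate 1 *)
Definition kQ (p q : list nat) : R :=
  let k := nblocks p in
  if leqb p q then - INR (k * (k - 1) / 2)
  else sumR (seq 0 k) (fun b => sumR (seq 0 b)
         (fun a => if leqb (merge p a b) q then 1 else 0)).

Fixpoint kQpow (n j : nat) (p q : list nat) : R :=
  match j with
  | O => if leqb p q then 1 else 0
  | S j' => sumR (parts n) (fun s => kQ p s * kQpow n j' s q)
  end.

Definition kexp_partial (n : nat) (t : R) (p q : list nat) (m : nat) : R :=
  sum_f_R0 (fun j => t ^ j / INR (fact j) * kQpow n j p q) m.

(* finite-dimensional distribution of the Kingman coalescent started at
   singletons, given its transition function P t p q = exp(tQ)_{p,q};
   obs = [(t_1,pi_1); ...; (t_k,pi_k)] with 0 <= t_1 <= ... <= t_k *)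
Fixpoint kfdd (P : R -> list nat -> list nat -> R) (t0 : R) (p0 : list nat)
    (obs : list (R * list nat)) : R :=
  match obs with
  | [] => 1
  | (t, p) :: obs' => P (t - t0) p0 p * kfdd P t p obs'
  end.

Fixpoint times_ok (t0 : R) (obs : list (R * list nat)) : Prop :=
  match obs with
  | [] => True
  | (t, _) :: obs' => t0 <= t /\ times_ok t obs'
  end.

(* law of R^N_g = floor(N r_g) + 1 with r_g uniform on [0,1):
   uniform on {1,...,N} *)
Definition probR (N i : nat) : R :=
  if andb (1 <=? i)%nat (i <=? N)%nat then / INR N else 0.

Definition CN (N : nat) : R := sumR (seq 1 N) (fun i => / INR i * probR N i).

(* Expectation over G generations (backwards in time) of k applied to the
   list of parent maps [f_1; ...; f_G]: generation g >= 1 has size R_g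
   uniform on {1..N} (independently), and each of the R_(g-1) individuals
   of generation g-1 chooses its parent uniformly among the R_g
   individuals of generation g, independently (f_g : [R_(g-1)] -> [R_g],
   individuals 0-indexed). rprev is the size of the current generation. *)
Fixpoint wf_exp (N rprev G : nat) (k : list (list nat) -> R) : R :=
  match G with
  | O => k []
  | S G' =>
      sumR (seq 1 N) (fun r => probR N r *
        sumR (seqs r rprev) (fun f =>
          (/ INR r) ^ rprev * wf_exp N r G' (fun fs => k (f :: fs))))
  end.

Fixpoint anc (fs : list (list nat)) (g i : nat) : nat :=
  match g, fs with
  | O, _ => i
  | S g', f :: fs' => anc fs' g' (nth i f 0%nat)
  | S _, [] => i
  end.

(* Pi^{N,n}_g for the sample 0..n-1 of generation 0, as a restricted growth
   string: i ~ j iff same ancestor g generations back *)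
Definition Pi (fs : list (list nat)) (n g : nat) : list nat :=
  canon (map (anc fs g) (seq 0 n)).

Definition gen_of (N : nat) (t : R) : nat :=
  Z.to_nat (Int_part (t * INR N / ln (INR N))).

Definition horizon (N : nat) (obs : list (R * list nat)) : nat :=
  fold_right (fun o m => Nat.max (gen_of N (fst o)) m) 0%nat obs.

(* P( Pi^{N,n}_{floor(t_i N/log N)} = pi_i for all i ), the sample being
   individuals 0..n-1 of generation 0 of size r0 *)
Definition wf_fdd (N n r0 : nat) (obs : list (R * list nat)) : R :=
  wf_exp N r0 (horizon N obs) (fun fs =>
    if forallb (fun o => leqb (Pi fs n (gen_of N (fst o))) (snd o)) obs
    then 1 else 0).

(* Main.v *)
Require Import Defs.
From Stdlib Require Import Reals List ListDec Arith ZArith Lia Lra.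
Import ListNotations.
Open Scope R_scope.

Lemma leqb_eq : forall l1 l2, leqb l1 l2 = true <-> l1 = l2.
Proof.
  induction l1 as [|x l1 IH]; destruct l2 as [|y l2]; simpl; split; intro H;
    try discriminate; auto.
  - apply andb_prop in H as [H1 H2]. apply Nat.eqb_eq in H1. apply IH in H2. subst; auto.
  - inversion H; subst. rewrite Nat.eqb_refl, (proj2 (IH l2) eq_refl). auto.
Qed.

Lemma leqb_refl : forall l, leqb l l = true.
Proof. intro; apply leqb_eq; auto. Qed.

Lemma leqb_neq : forall l1 l2, leqb l1 l2 = false <-> l1 <> l2.
Proof.
  intros. split; intro H.
  - intro E. apply leqb_eq in E. congruence.
  - destruct (leqb l1 l2) eqn:E; auto. apply leqb_eq in E. congruence.
Qed.

Definition indb (b : bool) : R := if b then 1 else 0.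

Lemma sumR_nil {A} (h : A -> R) : sumR [] h = 0.
Proof. reflexivity. Qed.
Lemma sumR_cons {A} (a : A) l h : sumR (a :: l) h = h a + sumR l h.
Proof. reflexivity. Qed.

Lemma sumR_app {A} (l1 l2 : list A) h : sumR (l1 ++ l2) h = sumR l1 h + sumR l2 h.
Proof. induction l1; simpl; [lra|]. unfold sumR in *; simpl. rewrite IHl1. lra. Qed.

Lemma sumR_ext {A} (l : list A) f g :
  (forall x, In x l -> f x = g x) -> sumR l f = sumR l g.
Proof.
  induction l; intros H; simpl; auto. unfold sumR in *; simpl.
  rewrite H by (left; auto). rewrite IHl; auto. intros; apply H; right; auto.
Qed.

Lemma sumR_plus {A} (l : list A) f g :
  sumR l (fun x => f x + g x) = sumR l f + sumR l g.
Proof. induction l; unfold sumR in *; simpl; [lra|]. rewrite IHl; lra. Qed.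

Lemma sumR_minus {A} (l : list A) f g :
  sumR l (fun x => f x - g x) = sumR l f - sumR l g.
Proof. induction l; unfold sumR in *; simpl; [lra|]. rewrite IHl; lra. Qed.

Lemma sumR_scal {A} (l : list A) c f :
  sumR l (fun x => c * f x) = c * sumR l f.
Proof. induction l; unfold sumR in *; simpl; [lra|]. rewrite IHl; lra. Qed.

Lemma sumR_scal_r {A} (l : list A) c f :
  sumR l (fun x => f x * c) = sumR l f * c.
Proof. induction l; unfold sumR in *; simpl; [lra|]. rewrite IHl; lra. Qed.

Lemma sumR_zero {A} (l : list A) : sumR l (fun _ => 0) = 0.
Proof. induction l; unfold sumR in *; simpl; [lra|]. rewrite IHl; lra. Qed.

Lemma sumR_const {A} (l : list A) c : sumR l (fun _ => c) = INR (length l) * c.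
Proof.
  induction l; unfold sumR in *; simpl; [lra|]. rewrite IHl.
  destruct (length l); simpl; lra.
Qed.

Lemma sumR_map {A B} (g : A -> B) l f : sumR (map g l) f = sumR l (fun x => f (g x)).
Proof. induction l; unfold sumR in *; simpl; auto. rewrite IHl; auto. Qed.

Lemma sumR_flat_map {A B} (g : A -> list B) l f :
  sumR (flat_map g l) f = sumR l (fun x => sumR (g x) f).
Proof. induction l; simpl; auto. rewrite sumR_app, IHl. reflexivity. Qed.

Lemma sumR_swap {A B} (l1 : list A) (l2 : list B) f :
  sumR l1 (fun x => sumR l2 (fun y => f x y)) = sumR l2 (fun y => sumR l1 (fun x => f x y)).
Proof.
  induction l1.
  - rewrite sumR_nil. symmetry. apply sumR_zero.
  - rewrite sumR_cons, IHl1. rewrite <- sumR_plus. apply sumR_ext. intros; rewrite sumR_cons; auto.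
Qed.

Lemma sumR_le {A} (l : list A) f g :
  (forall x, In x l -> f x <= g x) -> sumR l f <= sumR l g.
Proof.
  induction l; intros H; unfold sumR in *; simpl; [lra|].
  pose proof (H a (or_introl eq_refl)). pose proof (IHl (fun x Hx => H x (or_intror Hx))). lra.
Qed.

Lemma sumR_nonneg {A} (l : list A) f :
  (forall x, In x l -> 0 <= f x) -> 0 <= sumR l f.
Proof. intros. rewrite <- (sumR_zero l). apply sumR_le; auto. Qed.

Lemma sumR_abs {A} (l : list A) f : Rabs (sumR l f) <= sumR l (fun x => Rabs (f x)).
Proof.
  induction l; unfold sumR in *; simpl. rewrite Rabs_R0; lra.
  eapply Rle_trans. apply Rabs_triang. lra.
Qed.

Lemma sumR_ind_le1 {A} (l : list A) (P : A -> bool) x0 :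
  NoDup l -> (forall x, In x l -> P x = true -> x = x0) ->
  sumR l (fun x => indb (P x)) <= 1.
Proof.
  induction l; intros ND H. rewrite sumR_nil; lra.
  rewrite sumR_cons. inversion ND; subst.
  destruct (P a) eqn:E; unfold indb at 1.
  - assert (a = x0) by (apply H; simpl; auto). subst.
    rewrite sumR_ext with (g := fun _ => 0). rewrite sumR_zero; lra.
    intros x Hx. destruct (P x) eqn:E2; unfold indb; auto.
    exfalso. assert (x = x0) by (apply H; simpl; auto). subst; auto.
  - assert (sumR l (fun x => indb (P x)) <= 1); [|lra].
    apply IHl; auto. intros; apply H; simpl; auto.
Qed.

Lemma sumR_delta {A} (l : list A) (eqd : forall x y : A, {x = y} + {x <> y}) x0 f :
  NoDup l -> In x0 l ->
  sumR l (fun x => if eqd x0 x then f x else 0) = f x0.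
Proof.
  induction l; intros ND Hin; inversion Hin; inversion ND; subst; rewrite sumR_cons.
  - destruct (eqd x0 x0); [|congruence].
    rewrite sumR_ext with (g := fun _ => 0). rewrite sumR_zero; lra.
    intros x Hx. destruct (eqd x0 x); auto. subst; contradiction.
  - destruct (eqd x0 a). subst; contradiction. rewrite IHl; auto. lra.
Qed.

Lemma sumR_delta_leqb (l : list (list nat)) x0 f :
  NoDup l -> In x0 l ->
  sumR l (fun x => indb (leqb x0 x) * f x) = f x0.
Proof.
  intros. rewrite <- (sumR_delta l (list_eq_dec Nat.eq_dec) x0 f); auto.
  apply sumR_ext; intros x _. unfold indb.
  destruct (list_eq_dec Nat.eq_dec x0 x).
  - subst. rewrite leqb_refl. lra.
  - destruct (leqb x0 x) eqn:E. apply leqb_eq in E; contradiction. lra.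
Qed.

Lemma sumR_delta_leqb' (l : list (list nat)) x0 f :
  NoDup l -> In x0 l ->
  sumR l (fun x => indb (leqb x x0) * f x) = f x0.
Proof.
  intros. rewrite <- (sumR_delta_leqb l x0 f); auto. apply sumR_ext; intros.
  destruct (leqb x x0) eqn:E; destruct (leqb x0 x) eqn:E2; auto;
  try (apply leqb_eq in E; subst; rewrite leqb_refl in E2; discriminate);
  try (apply leqb_eq in E2; subst; rewrite leqb_refl in E; discriminate).
Qed.

Lemma sumR_seqs_S r k f :
  sumR (seqs r (S k)) f = sumR (seq 0 r) (fun x => sumR (seqs r k) (fun h => f (x :: h))).
Proof. simpl. rewrite sumR_flat_map. apply sumR_ext; intros. apply sumR_map. Qed.

Lemma in_seqs r k h : In h (seqs r k) <-> length h = k /\ (forall x, In x h -> (x < r)%nat).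
Proof.
  revert h; induction k; intros h; simpl.
  - split. intros [<-|[]]; simpl; split; auto; intros _ [].
    intros [H _]. destruct h; simpl in H; auto; discriminate.
  - rewrite in_flat_map. split.
    + intros [x [Hx Hm]]. apply in_map_iff in Hm as [h' [<- Hh']].
      apply IHk in Hh' as [L A]. apply in_seq in Hx. simpl. split; [lia|].
      intros y [<-|Hy]; [lia|auto].
    + intros [L A]. destruct h as [|x h']; simpl in L; [discriminate|].
      exists x; split. apply in_seq. specialize (A x (or_introl eq_refl)); lia.
      apply in_map. apply IHk. split. lia. intros; apply A; right; auto.
Qed.



Lemma sumR_seqs_const r k c : sumR (seqs r k) (fun _ => c) = INR r ^ k * c.
Proof.
  induction k. unfold seqs. rewrite sumR_cons, sumR_nil. simpl; lra.
  rewrite sumR_seqs_S. rewrite sumR_ext with (g := fun _ => INR r ^ k * c) by auto.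
  rewrite sumR_const, length_seq. simpl. lra.
Qed.

Lemma sumR_seq_eq r y f : (y < r)%nat ->
  sumR (seq 0 r) (fun x => if Nat.eq_dec y x then f x else 0) = f y.
Proof. intros. apply sumR_delta. apply seq_NoDup. apply in_seq; lia. Qed.

Lemma NoDup_seqs r k : NoDup (seqs r k).
Proof.
  induction k; simpl. constructor; auto. constructor.
  assert (forall l : list nat, NoDup l -> NoDup (flat_map (fun x => map (cons x) (seqs r k)) l)).
  { induction l; intros ND; simpl. constructor. inversion ND; subst.
    apply NoDup_app; auto.
    - apply NoDup_map_NoDup_ForallPairs; auto. intros ? ? ? ? E; inversion E; auto.
    - intros h G1 G2. apply in_map_iff in G1 as [? [<- _]].
      apply in_flat_map in G2 as [y [Hy G2]]. apply in_map_iff in G2 as [? [E _]].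
      inversion E; subst; contradiction. }
  apply H, seq_NoDup.
Qed.

Lemma forallb_ext_in {A} (f g : A -> bool) l :
  (forall x, In x l -> f x = g x) -> forallb f l = forallb g l.
Proof.
  induction l; intros H; simpl; auto. rewrite H by (left; auto). rewrite IHl; auto.
  intros; apply H; right; auto.
Qed.

Lemma nth_map_lt {A B} (f : A -> B) l d d0 i : (i < length l)%nat -> nth i (map f l) d = f (nth i l d0).
Proof. intros. rewrite (nth_indep _ d (f d0)) by (rewrite length_map; auto). apply map_nth. Qed.

Lemma Rdiv_le_0_compat a b : 0 <= a -> 0 < b -> 0 <= a / b.
Proof. intros. unfold Rdiv. apply Rmult_le_pos; auto. left; apply Rinv_0_lt_compat; auto. Qed.

Lemma Rdiv_le_1 a b : 0 < b -> a <= b -> a / b <= 1.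
Proof. intros. unfold Rdiv. apply Rmult_le_reg_r with b; auto. rewrite Rmult_assoc, Rinv_l by lra. lra. Qed.

Lemma Rdiv_ge_1 a b : 0 < b -> b <= a -> 1 <= a / b.
Proof. intros. unfold Rdiv. apply Rmult_le_reg_r with b; auto. rewrite Rmult_assoc, Rinv_l by lra. lra. Qed.

Definition ins {A} (b : nat) (x : A) (h : list A) := firstn b h ++ x :: skipn b h.
Definition del {A} (b : nat) (h : list A) := firstn b h ++ skipn (S b) h.

Lemma sumR_seqs_ins : forall b k r F, (b <= k)%nat ->
  sumR (seqs r (S k)) F =
  sumR (seqs r k) (fun h => sumR (seq 0 r) (fun x => F (ins b x h))).
Proof.
  induction b; intros k r F Hb.
  - rewrite sumR_seqs_S. rewrite sumR_swap. reflexivity.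
  - destruct k as [|k]; [lia|].
    rewrite sumR_seqs_S.
    rewrite sumR_ext with (g := fun y => sumR (seqs r k)
        (fun h' => sumR (seq 0 r) (fun x => F (y :: ins b x h')))).
    2:{ intros y _. apply (IHb k r (fun h => F (y :: h))). lia. }
    rewrite sumR_seqs_S. reflexivity.
Qed.

Lemma proj_sum : forall m u (psi : list nat -> R) r, NoDup u -> (forall x, In x u -> (x < m)%nat) ->
  sumR (seqs r m) (fun f => psi (map (fun i => nth i f 0%nat) u)) =
  INR r ^ (m - length u) * sumR (seqs r (length u)) psi.
Proof.
  induction m; intros u psi r ND Hu.
  - destruct u as [|x u]. simpl. unfold sumR; simpl; lra.
    specialize (Hu x (or_introl eq_refl)); lia.
  - rewrite sumR_seqs_S.
    destruct (in_dec Nat.eq_dec 0%nat u) as [H0|H0].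
    + apply in_split in H0 as [u1 [u2 ->]].
      set (u' := map pred (u1 ++ u2)).
      assert (ND' : NoDup (u1 ++ u2)) by (eapply NoDup_remove_1; eauto).
      assert (nz : forall i, In i (u1 ++ u2) -> i <> 0%nat).
      { intros i Hi ->. eapply NoDup_remove_2; eauto. }
      assert (NDu' : NoDup u').
      { apply NoDup_map_NoDup_ForallPairs; auto. intros x y Hx Hy E.
        pose proof (nz x Hx); pose proof (nz y Hy); lia. }
      assert (Hu' : forall x, In x u' -> (x < m)%nat).
      { intros x Hx. unfold u' in Hx. apply in_map_iff in Hx as [y [<- Hy]].
        pose proof (nz y Hy) as Hny. assert (Hin : In y (u1 ++ 0%nat :: u2)).
        { apply in_app_or in Hy as [?|?]; apply in_or_app; simpl; auto. }
        specialize (Hu y Hin). lia. }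
      assert (Lu : length (u1 ++ 0%nat :: u2) = S (length u')).
      { unfold u'. rewrite length_map, !length_app. simpl. lia. }
      assert (Eq : forall x f', map (fun i => nth i (x :: f') 0%nat) (u1 ++ 0%nat :: u2) =
                   ins (length u1) x (map (fun i => nth i f' 0%nat) u')).
      { intros x f'.
        assert (E1 : map (fun i => nth i f' 0%nat) u' =
           map (fun i => nth i (x :: f') 0%nat) u1 ++ map (fun i => nth i (x :: f') 0%nat) u2).
        { unfold u'. rewrite map_map, map_app. f_equal; apply map_ext_in; intros i Hi;
          (destruct i; [exfalso; apply (nz 0%nat); auto; apply in_or_app; auto|reflexivity]). }
        rewrite E1, map_app. simpl.
        replace (length u1) with (length (map (fun i => nth i (x :: f') 0%nat) u1)) by apply length_map.
        unfold ins. rewrite firstn_app, skipn_app, Nat.sub_diag, firstn_all, skipn_all. simpl.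
        rewrite app_nil_r. reflexivity. }
      rewrite sumR_ext with (g := fun x => INR r ^ (m - length u') *
          sumR (seqs r (length u')) (fun h => psi (ins (length u1) x h))).
      2:{ intros x _. rewrite <- (IHm u' (fun h => psi (ins (length u1) x h)) r NDu' Hu').
          apply sumR_ext. intros f' _. rewrite Eq. reflexivity. }
      rewrite sumR_scal. rewrite Lu. simpl (S m - S _)%nat. f_equal.
      rewrite sumR_swap. symmetry. apply sumR_seqs_ins.
      unfold u'. rewrite length_map, length_app. lia.
    + set (u' := map pred u).
      assert (NDu' : NoDup u').
      { apply NoDup_map_NoDup_ForallPairs; auto. intros x y Hx Hy E.
        assert (x <> 0%nat) by (intros ->; auto). assert (y <> 0%nat) by (intros ->; auto). lia. }
      assert (Hu' : forall x, In x u' -> (x < m)%nat).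
      { intros x Hx. unfold u' in Hx. apply in_map_iff in Hx as [y [<- Hy]].
        assert (y <> 0%nat) by (intros ->; auto). specialize (Hu y Hy). lia. }
      assert (Lu : length u' = length u) by (unfold u'; rewrite length_map; auto).
      assert (Km : (length u' <= m)%nat).
      { apply NoDup_incl_length with (l' := seq 0 m) in NDu'. rewrite length_seq in NDu'; auto.
        intros x Hx; apply in_seq; specialize (Hu' x Hx); lia. }
      rewrite sumR_ext with (g := fun x => INR r ^ (m - length u') * sumR (seqs r (length u')) psi).
      2:{ intros x _. rewrite <- IHm; auto. apply sumR_ext. intros f' _. f_equal.
          unfold u'. rewrite map_map. apply map_ext_in. intros i Hi. destruct i; [contradiction|reflexivity]. }
      rewrite sumR_const, length_seq. rewrite Lu in *.
      replace (S m - length u)%nat with (S (m - length u)) by lia. simpl. lra.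
Qed.

Fixpoint ffn (r k : nat) : nat :=
  match k with O => 1%nat | S k' => (ffn r k' * (r - k'))%nat end.

Definition indP (P : Prop) (d : {P} + {~P}) : R := if d then 1 else 0.

Lemma count_in r h : NoDup h -> (forall x, In x h -> (x < r)%nat) ->
  sumR (seq 0 r) (fun x => if in_dec Nat.eq_dec x h then 1 else 0) = INR (length h).
Proof.
  induction h as [|y h IH]; intros ND Hh.
  - simpl. rewrite sumR_zero; auto.
  - inversion ND; subst.
    rewrite sumR_ext with (g := fun x => (if Nat.eq_dec y x then 1 else 0) + (if in_dec Nat.eq_dec x h then 1 else 0)).
    + rewrite sumR_plus, IH; auto. rewrite sumR_seq_eq. rewrite length_cons, S_INR. lra.
      apply Hh; left; auto. intros; apply Hh; right; auto.
    + intros x _. destruct (Nat.eq_dec y x); subst.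
      * destruct (in_dec Nat.eq_dec x (x :: h)); [|simpl in n; tauto].
        destruct (in_dec Nat.eq_dec x h); [contradiction|lra].
      * destruct (in_dec Nat.eq_dec x (y :: h)) as [i|i]; destruct (in_dec Nat.eq_dec x h) as [j|j];
          simpl in i; try lra; intuition.
Qed.

Lemma count_inj r k :
  sumR (seqs r k) (fun h => if NoDup_dec Nat.eq_dec h then 1 else 0) = INR (ffn r k).
Proof.
  induction k.
  - unfold seqs. rewrite sumR_cons, sumR_nil. destruct (NoDup_dec Nat.eq_dec []) as [|n]; simpl. lra.
    exfalso; apply n; constructor.
  - rewrite sumR_seqs_S, sumR_swap. simpl ffn. rewrite mult_INR, <- IHk, <- sumR_scal_r.
    apply sumR_ext. intros h Hh. apply in_seqs in Hh as [L Hr].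
    destruct (NoDup_dec Nat.eq_dec h) as [ND|ND].
    + assert (Kr : (k <= r)%nat).
      { rewrite <- L. apply NoDup_incl_length with (l' := seq 0 r) in ND. rewrite length_seq in ND; auto.
        intros x Hx; apply in_seq; specialize (Hr x Hx); lia. }
      rewrite sumR_ext with (g := fun x => 1 - (if in_dec Nat.eq_dec x h then 1 else 0)).
      * rewrite sumR_minus, sumR_const, count_in, length_seq, L, minus_INR by auto. lra.
      * intros x _. destruct (NoDup_dec Nat.eq_dec (x :: h)) as [N2|N2];
          destruct (in_dec Nat.eq_dec x h) as [I|I]; try lra.
        -- inversion N2; contradiction.
        -- exfalso; apply N2; constructor; auto.
    + rewrite sumR_ext with (g := fun _ => 0). rewrite sumR_zero; lra.
      intros x _. destruct (NoDup_dec Nat.eq_dec (x :: h)) as [N2|N2]; auto.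
      inversion N2; contradiction.
Qed.

Lemma length_ins {A} b (x : A) h : (b <= length h)%nat -> length (ins b x h) = S (length h).
Proof. intros. unfold ins. rewrite length_app, firstn_length_le by auto. simpl. rewrite length_skipn. lia. Qed.

Lemma del_ins {A} b (x : A) h : (b <= length h)%nat -> del b (ins b x h) = h.
Proof.
  intros Hb. unfold del, ins.
  assert (L : length (firstn b h) = b) by (apply firstn_length_le; auto).
  rewrite firstn_app, L, Nat.sub_diag, firstn_O, app_nil_r.
  rewrite firstn_all2 by lia.
  rewrite skipn_app, L. rewrite skipn_all2 by lia.
  replace (S b - b)%nat with 1%nat by lia. simpl. apply firstn_skipn.
Qed.

Lemma nth_ins_b {A} b (x : A) h d : (b <= length h)%nat -> nth b (ins b x h) d = x.
Proof.
  intros. unfold ins. rewrite app_nth2; rewrite firstn_length_le; auto. rewrite Nat.sub_diag. auto.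
Qed.

Lemma nth_ins_lt {A} b (x : A) h a d : (a < b)%nat -> (b <= length h)%nat -> nth a (ins b x h) d = nth a h d.
Proof.
  intros. unfold ins. rewrite app_nth1 by (rewrite firstn_length_le; lia).
  rewrite nth_firstn. destruct (a <? b)%nat eqn:E; auto. apply Nat.ltb_ge in E; lia.
Qed.

Lemma count_ker r k a b : (a < b)%nat -> (b < S k)%nat ->
  sumR (seqs r (S k)) (fun h =>
     if Nat.eq_dec (nth a h 0%nat) (nth b h 0%nat) then
     if NoDup_dec Nat.eq_dec (del b h) then 1 else 0 else 0) = INR (ffn r k).
Proof.
  intros Hab Hb. rewrite (sumR_seqs_ins b k) by lia. rewrite <- count_inj.
  apply sumR_ext. intros h Hh. apply in_seqs in Hh as [L Hr].
  rewrite sumR_ext with (g := fun x => (if Nat.eq_dec (nth a h 0%nat) x then 1 else 0) *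
                                     (if NoDup_dec Nat.eq_dec h then 1 else 0)).
  - rewrite sumR_scal_r, sumR_seq_eq. lra. apply Hr. apply nth_In. lia.
  - intros x _. rewrite nth_ins_lt, nth_ins_b, del_ins by lia.
    destruct (Nat.eq_dec (nth a h 0%nat) x); [|lra].
    destruct (NoDup_dec Nat.eq_dec h); lra.
Qed.

Lemma nth_del {A} b (h : list A) i d :
  nth i (del b h) d = if (i <? b)%nat then nth i h d else nth (S i) h d.
Proof.
  unfold del. destruct (i <? b)%nat eqn:E.
  - apply Nat.ltb_lt in E. destruct (le_lt_dec b (length h)).
    + rewrite app_nth1 by (rewrite firstn_length_le; lia). rewrite nth_firstn. apply Nat.ltb_lt in E; rewrite E; auto.
    + rewrite firstn_all2 by lia. rewrite skipn_all2 by lia. rewrite app_nil_r; auto.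
  - apply Nat.ltb_ge in E. destruct (le_lt_dec b (length h)).
    + rewrite app_nth2 by (rewrite firstn_length_le; lia). rewrite firstn_length_le by lia.
      rewrite nth_skipn. f_equal. lia.
    + rewrite firstn_all2 by lia. rewrite skipn_all2 by lia. rewrite app_nil_r.
      rewrite !nth_overflow; auto; lia.
Qed.

Lemma length_del {A} b (h : list A) : (b < length h)%nat -> length (del b h) = pred (length h).
Proof. intros. unfold del. rewrite length_app, firstn_length_le, length_skipn; lia. Qed.

Lemma del_inj {A} b (h : list A) d : (b < length h)%nat -> NoDup (del b h) ->
  forall x y, (x < length h)%nat -> (y < length h)%nat -> x <> b -> y <> b ->
  nth x h d = nth y h d -> x = y.
Proof.
  intros Hb ND x y Hx Hy Hxb Hyb E.
  rewrite (NoDup_nth _ d) in ND. rewrite length_del in ND by auto.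
  set (f := fun z => if (z <? b)%nat then z else pred z).
  assert (Hf : forall z, (z < length h)%nat -> z <> b -> nth (f z) (del b h) d = nth z h d /\ (f z < pred (length h))%nat).
  { intros z Hz Hzb. unfold f. rewrite nth_del. destruct (z <? b)%nat eqn:Ez.
    - rewrite Ez. apply Nat.ltb_lt in Ez. split; auto; lia.
    - apply Nat.ltb_ge in Ez. destruct (pred z <? b)%nat eqn:E2. apply Nat.ltb_lt in E2; lia.
      split. f_equal; lia. lia. }
  destruct (Hf x Hx Hxb) as [A1 B1]. destruct (Hf y Hy Hyb) as [A2 B2].
  assert (f x = f y) by (apply ND; auto; congruence).
  unfold f in H. destruct (Nat.ltb_spec x b); destruct (Nat.ltb_spec y b); lia.
Qed.

Fixpoint seen_of (seen l : list nat) : list nat :=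
  match l with
  | [] => seen
  | x :: l' => match Defs.pos x seen with
               | Some _ => seen_of seen l'
               | None => seen_of (seen ++ [x]) l'
               end
  end.

Definition idx (x : nat) (u : list nat) : nat :=
  match Defs.pos x u with Some k => k | None => 0%nat end.

Lemma pos_none x s : Defs.pos x s = None <-> ~ In x s.
Proof.
  induction s as [|y s IH]; simpl. split; auto.
  destruct (Nat.eqb_spec x y).
  - subst. split; [discriminate|]. intros H; exfalso; auto.
  - destruct (Defs.pos x s) eqn:E.
    + split; [discriminate|]. intros H. exfalso. apply H. right.
      destruct (In_dec Nat.eq_dec x s) as [i|i]; auto. apply IH in i. discriminate.
    + split; auto. intros _ [?|?]; [congruence|]. apply (proj1 IH eq_refl); auto.
Qed.

Lemma pos_some x s k : Defs.pos x s = Some k -> (k < length s)%nat /\ nth k s 0%nat = x.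
Proof.
  revert k; induction s as [|y s IH]; simpl; intros k H. discriminate.
  destruct (Nat.eqb_spec x y). inversion H; subst. split; auto; lia.
  destruct (Defs.pos x s) eqn:E; [|discriminate]. inversion H; subst.
  destruct (IH n0 eq_refl). split; auto; lia.
Qed.

Lemma pos_in x s : In x s -> exists k, Defs.pos x s = Some k.
Proof. intros H. destruct (Defs.pos x s) eqn:E; eauto. apply pos_none in E; contradiction. Qed.

Lemma pos_app_some x s w k : Defs.pos x s = Some k -> Defs.pos x (s ++ w) = Some k.
Proof.
  revert k; induction s as [|y s IH]; simpl; intros k H. discriminate.
  destruct (Nat.eqb_spec x y); auto.
  destruct (Defs.pos x s) eqn:E; [|discriminate]. rewrite (IH n0 eq_refl). auto.
Qed.

Lemma pos_app_new x s w : ~ In x s -> Defs.pos x (s ++ x :: w) = Some (length s).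
Proof.
  induction s as [|y s IH]; simpl; intros H. rewrite Nat.eqb_refl; auto.
  destruct (Nat.eqb_spec x y). exfalso; auto. rewrite IH; auto.
Qed.

Lemma seen_of_app : forall l seen, exists w, seen_of seen l = seen ++ w.
Proof.
  induction l as [|x l IH]; intros seen; simpl. exists []; rewrite app_nil_r; auto.
  destruct (Defs.pos x seen). apply IH. destruct (IH (seen ++ [x])) as [w E]. rewrite E.
  exists (x :: w). rewrite <- app_assoc; auto.
Qed.

Lemma canon_aux_idx : forall l seen,
  canon_aux seen l = map (fun x => idx x (seen_of seen l)) l.
Proof.
  induction l as [|x l IH]; intros seen; simpl; auto.
  destruct (Defs.pos x seen) eqn:E.
  - rewrite IH. f_equal. destruct (seen_of_app l seen) as [w Ew]. rewrite Ew. unfold idx.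
    rewrite (pos_app_some _ _ _ _ E). auto.
  - rewrite IH. f_equal. destruct (seen_of_app l (seen ++ [x])) as [w Ew]. rewrite Ew. unfold idx.
    rewrite <- app_assoc. simpl. rewrite pos_app_new; auto. apply pos_none; auto.
Qed.

Lemma in_seen_of : forall l seen x, In x (seen_of seen l) <-> In x seen \/ In x l.
Proof.
  induction l as [|y l IH]; intros seen x; simpl. tauto.
  destruct (Defs.pos y seen) eqn:E.
  - rewrite IH. split. tauto. intros [?|[<-|?]]; auto. left.
    destruct (In_dec Nat.eq_dec y seen); auto. apply pos_none in n0. congruence.
  - rewrite IH, in_app_iff. simpl. tauto.
Qed.

Lemma NoDup_seen_of : forall l seen, NoDup seen -> NoDup (seen_of seen l).
Proof.
  induction l as [|y l IH]; intros seen ND; simpl; auto.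
  destruct (Defs.pos y seen) eqn:E; apply IH; auto.
  apply NoDup_app; auto. repeat constructor; auto.
  intros z Hz [<-|[]]. apply pos_none in E; contradiction.
Qed.

Definition useen (l : list nat) := seen_of [] l.
Definition kb (p : list nat) : nat := length (useen p).

Lemma canon_idx l : canon l = map (fun x => idx x (useen l)) l.
Proof. apply canon_aux_idx. Qed.

Lemma useen_in l x : In x (useen l) <-> In x l.
Proof. unfold useen. rewrite in_seen_of. simpl; tauto. Qed.

Lemma useen_NoDup l : NoDup (useen l).
Proof. apply NoDup_seen_of. constructor. Qed.

Lemma idx_spec x u : In x u -> (idx x u < length u)%nat /\ nth (idx x u) u 0%nat = x.
Proof. intros H. destruct (pos_in _ _ H) as [k E]. unfold idx; rewrite E. apply pos_some; auto. Qed.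

Lemma idx_nth u i : NoDup u -> (i < length u)%nat -> idx (nth i u 0%nat) u = i.
Proof.
  intros ND Hi. destruct (idx_spec (nth i u 0%nat) u (nth_In _ _ Hi)) as [A B].
  rewrite (NoDup_nth u 0%nat) in ND. apply ND; auto.
Qed.

Lemma length_useen_le l : (length (useen l) <= length l)%nat.
Proof.
  apply NoDup_incl_length. apply useen_NoDup. intros x; apply useen_in.
Qed.

Lemma length_canon l : length (canon l) = length l.
Proof. rewrite canon_idx, length_map; auto. Qed.

Lemma canon_bound l y : In y (canon l) -> (y < kb l)%nat.
Proof.
  rewrite canon_idx. intros H. apply in_map_iff in H as [x [<- Hx]].
  apply idx_spec. apply useen_in; auto.
Qed.

Definition injon (s : nat -> nat) (l : list nat) :=
  forall x y, In x l -> In y l -> s x = s y -> x = y.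

Lemma pos_map s x l : injon s (x :: l) -> Defs.pos (s x) (map s l) = Defs.pos x l.
Proof.
  induction l as [|y l IH]; intros I; simpl; auto.
  destruct (Nat.eqb_spec (s x) (s y)); destruct (Nat.eqb_spec x y); auto.
  - exfalso. apply n. apply I; simpl; auto.
  - subst; congruence.
  - rewrite IH; auto. intros a b Ha Hb E. apply I; simpl in *; tauto.
Qed.

Lemma relabel : forall l seen s, injon s (seen ++ l) ->
  canon_aux (map s seen) (map s l) = canon_aux seen l /\
  seen_of (map s seen) (map s l) = map s (seen_of seen l).
Proof.
  induction l as [|x l IH]; intros seen s I; simpl. auto.
  rewrite pos_map.
  2:{ intros a b Ha Hb E. apply I; auto; repeat rewrite in_app_iff in *; simpl in *; tauto. }
  destruct (Defs.pos x seen) eqn:E.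
  - destruct (IH seen s) as [A B]. intros a b Ha Hb Ee. apply I; auto; repeat rewrite in_app_iff in *; simpl in *; tauto.
    rewrite A, B; auto.
  - destruct (IH (seen ++ [x]) s) as [A B]. intros a b Ha Hb Ee. apply I; auto; repeat rewrite in_app_iff in *; simpl in *; tauto.
    rewrite map_app in A, B. simpl in A, B. rewrite length_map. rewrite A, B; auto.
Qed.

Lemma canon_relabel s l : injon s l -> canon (map s l) = canon l.
Proof. intros. unfold canon. apply (relabel l [] s); auto. Qed.

Lemma useen_relabel s l : injon s l -> useen (map s l) = map s (useen l).
Proof. intros. unfold useen. apply (relabel l [] s); auto. Qed.

Lemma idx_injon l : injon (fun x => idx x (useen l)) l.
Proof.
  intros x y Hx Hy E. apply useen_in in Hx, Hy.
  destruct (idx_spec _ _ Hx) as [_ B1]. destruct (idx_spec _ _ Hy) as [_ B2]. congruence.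
Qed.

Lemma canon_canon l : canon (canon l) = canon l.
Proof.
  assert (H : canon l = map (fun x => idx x (useen l)) l) by apply canon_idx.
  rewrite H at 1. apply canon_relabel, idx_injon.
Qed.

Lemma kb_canon l : kb (canon l) = kb l.
Proof.
  unfold kb. rewrite canon_idx at 1. rewrite useen_relabel by apply idx_injon.
  rewrite length_map; auto.
Qed.

Lemma in_parts n c : In c (parts n) <-> length c = n /\ (forall x, In x c -> (x < n)%nat) /\ canon c = c.
Proof.
  unfold parts. rewrite filter_In, in_seqs. rewrite leqb_eq. tauto.
Qed.

Lemma NoDup_parts n : NoDup (parts n).
Proof. apply NoDup_filter, NoDup_seqs. Qed.

Lemma canon_in_parts n l : length l = n -> In (canon l) (parts n).
Proof.
  intros L. apply in_parts. split; [rewrite length_canon; auto|]. split; [|apply canon_canon].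
  intros x Hx. apply canon_bound in Hx. pose proof (length_useen_le l). unfold kb in Hx. lia.
Qed.

Lemma parts_bound n p x : In p (parts n) -> In x p -> (x < kb p)%nat.
Proof. intros Hp Hx. apply in_parts in Hp as [_ [_ C]]. rewrite <- C in Hx. rewrite <- C. rewrite kb_canon. apply canon_bound; auto. Qed.

Lemma parts_label n p l : In p (parts n) -> (l < kb p)%nat -> In l p.
Proof.
  intros Hp Hl. apply in_parts in Hp as [_ [_ C]].
  rewrite <- C, canon_idx. apply in_map_iff. exists (nth l (useen p) 0%nat). split.
  apply idx_nth; auto. apply useen_NoDup. apply useen_in, nth_In; auto.
Qed.

Lemma nblocks_kb p : nblocks p = kb p.
Proof.
  unfold nblocks, kb. apply Nat.le_antisymm; apply NoDup_incl_length.
  apply NoDup_nodup. intros x Hx. apply useen_in. apply nodup_In in Hx; auto.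
  apply useen_NoDup. intros x Hx. apply nodup_In. apply useen_in; auto.
Qed.

Lemma singletons_in_parts n : In (singletons n) (parts n).
Proof.
  apply in_parts. unfold singletons. rewrite length_seq. split; auto. split.
  intros x Hx; apply in_seq in Hx; lia.
  assert (Hgen : forall m k, canon_aux (seq 0 k) (seq k m) = seq k m).
  { induction m; intros k; simpl; auto.
    rewrite (proj2 (pos_none k (seq 0 k))). rewrite length_seq.
    rewrite <- seq_S. rewrite IHm. auto. intros H; apply in_seq in H; lia. }
  apply (Hgen n 0%nat).
Qed.

Definition cmap (h p : list nat) : list nat := canon (map (fun i => nth i h 0%nat) p).

Definition Tr (r : nat) (p q : list nat) : R :=
  (/ INR r) ^ kb p * sumR (seqs r (kb p)) (fun h => indb (leqb (cmap h p) q)).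

Definition PiN (N : nat) (p q : list nat) : R :=
  sumR (seq 1 N) (fun r => probR N r * Tr r p q).

Lemma aggregate n (L : list (list nat)) (c : list nat -> list nat) (phi : list nat -> R) :
  (forall h, In h L -> In (c h) (parts n)) ->
  sumR L (fun h => phi (c h)) =
  sumR (parts n) (fun q => phi q * sumR L (fun h => indb (leqb (c h) q))).
Proof.
  intros H. transitivity (sumR (parts n) (fun q => sumR L (fun h => indb (leqb (c h) q) * phi q))).
  2:{ apply sumR_ext; intros q _. rewrite sumR_scal_r, Rmult_comm; reflexivity. }
  rewrite sumR_swap. apply sumR_ext. intros h Hh. rewrite sumR_delta_leqb; auto. apply NoDup_parts.
Qed.

Lemma cmap_parts n h p : length p = n -> In (cmap h p) (parts n).
Proof. intros. apply canon_in_parts. rewrite length_map; auto. Qed.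

Lemma Tr_rowsum n r p : (1 <= r)%nat -> length p = n ->
  sumR (parts n) (fun q => Tr r p q) = 1.
Proof.
  intros Hr Hp. unfold Tr. rewrite sumR_scal.
  rewrite sumR_swap.
  rewrite sumR_ext with (g := fun _ => 1).
  - rewrite sumR_seqs_const. rewrite Rmult_1_r, <- Rpow_mult_distr, Rinv_l, pow1; [reflexivity|].
    apply not_0_INR; lia.
  - intros h _. pose proof (sumR_delta_leqb (parts n) (cmap h p) (fun _ => 1) (NoDup_parts n) (cmap_parts n h p Hp)).
    rewrite <- H. apply sumR_ext; intros; lra.
Qed.

Lemma probR_sum N : (1 <= N)%nat -> sumR (seq 1 N) (fun r => probR N r) = 1.
Proof.
  intros HN. rewrite sumR_ext with (g := fun _ => / INR N).
  rewrite sumR_const, length_seq. field. apply not_0_INR; lia.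
  intros r Hr. apply in_seq in Hr. unfold probR.
  replace ((1 <=? r)%nat && (r <=? N)%nat)%bool with true; auto.
  symmetry. apply andb_true_intro; split; apply Nat.leb_le; lia.
Qed.

Lemma PiN_rowsum n N p : (1 <= N)%nat -> length p = n -> sumR (parts n) (fun q => PiN N p q) = 1.
Proof.
  intros HN Hp. unfold PiN. rewrite sumR_swap.
  rewrite sumR_ext with (g := fun r => probR N r). apply probR_sum; auto.
  intros r Hr. apply in_seq in Hr. rewrite sumR_scal, Tr_rowsum with (n := n); auto; [lra|lia].
Qed.

Lemma key_map f a : map (fun i => nth i f 0%nat) a =
  map (fun i => nth i (map (fun x => nth x f 0%nat) (useen a)) 0%nat) (canon a).
Proof.
  rewrite canon_idx, map_map. apply map_ext_in. intros x Hx.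
  assert (Hu : In x (useen a)) by (apply useen_in; auto).
  destruct (idx_spec _ _ Hu) as [L E].
  assert (L' : (idx x (useen a) < length (map (fun x0 => nth x0 f 0%nat) (useen a)))%nat) by (rewrite length_map; auto).
  rewrite (nth_indep _ 0%nat (nth 0%nat f 0%nat) L').
  rewrite (map_nth (fun x0 => nth x0 f 0%nat)). rewrite E. auto.
Qed.

Lemma KEY n m r a (phi : list nat -> R) : (1 <= r)%nat -> length a = n ->
  (forall x, In x a -> (x < m)%nat) ->
  sumR (seqs r m) (fun f => (/ INR r) ^ m * phi (canon (map (fun i => nth i f 0%nat) a))) =
  sumR (parts n) (fun q => Tr r (canon a) q * phi q).
Proof.
  intros Hr La Ha. rewrite sumR_scal.
  transitivity ((/ INR r) ^ m * sumR (seqs r m) (fun f => (fun h => phi (cmap h (canon a))) (map (fun x => nth x f 0%nat) (useen a)))).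
  { f_equal. apply sumR_ext. intros f _. unfold cmap. rewrite <- key_map. auto. }
  rewrite (proj_sum m (useen a) (fun h => phi (cmap h (canon a))) r).
  2: apply useen_NoDup.
  2:{ intros x Hx. rewrite useen_in in Hx. apply Ha. exact Hx. }
  assert (K : length (useen a) = kb (canon a)) by (rewrite kb_canon; auto).
  assert (Km : (length (useen a) <= m)%nat).
  { pose proof (useen_NoDup a) as ND. apply NoDup_incl_length with (l' := seq 0 m) in ND. rewrite length_seq in ND; auto.
    intros x Hx; apply in_seq. rewrite useen_in in Hx. specialize (Ha x Hx). lia. }
  rewrite K in *.
  rewrite (aggregate n _ (fun h => cmap h (canon a))).
  2:{ intros; apply cmap_parts. rewrite length_canon; auto. }
  rewrite <- Rmult_assoc. rewrite <- sumR_scal. apply sumR_ext. intros q _. unfold Tr.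
  replace ((/ INR r) ^ m * INR r ^ (m - kb (canon a))) with ((/ INR r) ^ kb (canon a)).
  lra.
  replace m with (kb (canon a) + (m - kb (canon a)))%nat at 1 by lia.
  rewrite pow_add, Rmult_assoc, <- Rpow_mult_distr, Rinv_l, pow1. lra. apply not_0_INR; lia.
Qed.

(* ---------- the Markov chain on partitions ---------- *)

Fixpoint Ev (n N G : nat) (p : list nat) (Psi : list (list nat) -> R) : R :=
  match G with
  | O => Psi [p]
  | S G' => sumR (parts n) (fun q => PiN N p q * Ev n N G' q (fun path => Psi (p :: path)))
  end.

Definition path (fs : list (list nat)) (a : list nat) (G : nat) : list (list nat) :=
  map (fun g => canon (map (anc fs g) a)) (seq 0 (S G)).

Lemma wf_exp_ext N : forall G r k1 k2, (forall fs, k1 fs = k2 fs) -> wf_exp N r G k1 = wf_exp N r G k2.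
Proof.
  induction G; intros r k1 k2 H; simpl; auto.
  apply sumR_ext; intros. f_equal. apply sumR_ext; intros. f_equal. apply IHG. intros; apply H.
Qed.

Lemma Ev_ext n N : forall G p Psi1 Psi2, (forall pa, Psi1 pa = Psi2 pa) -> Ev n N G p Psi1 = Ev n N G p Psi2.
Proof.
  induction G; intros p P1 P2 H; simpl; auto. apply sumR_ext; intros. f_equal. apply IHG. intros; apply H.
Qed.

Lemma path_cons f fs a G :
  path (f :: fs) a (S G) = canon a :: path fs (map (fun i => nth i f 0%nat) a) G.
Proof.
  unfold path. change (seq 0 (S (S G))) with (0%nat :: seq 1 (S G)).
  rewrite <- (seq_shift (S G) 0). cbn [map]. f_equal.
  - f_equal. simpl. apply map_id.
  - rewrite map_map. apply map_ext. intros g. rewrite map_map. reflexivity.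
Qed.

Lemma wf_Ev n N : forall G rprev a Psi, length a = n -> (forall x, In x a -> (x < rprev)%nat) ->
  wf_exp N rprev G (fun fs => Psi (path fs a G)) = Ev n N G (canon a) Psi.
Proof.
  induction G; intros rprev a Psi La Ha.
  - simpl. unfold path. simpl. f_equal. f_equal. f_equal. apply map_id.
  - cbn [wf_exp Ev]. unfold PiN.
    transitivity (sumR (seq 1 N) (fun r => probR N r * sumR (parts n) (fun q => Tr r (canon a) q *
        Ev n N G q (fun pa => Psi (canon a :: pa))))).
    + apply sumR_ext. intros r Hr. apply in_seq in Hr. f_equal.
      transitivity (sumR (seqs r rprev) (fun f => (/ INR r) ^ rprev *
        (fun q => Ev n N G q (fun pa => Psi (canon a :: pa))) (canon (map (fun i => nth i f 0%nat) a)))).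
      * apply sumR_ext. intros f Hf. f_equal. apply in_seqs in Hf as [Lf Hf].
        rewrite (wf_exp_ext N G r _ (fun fs => (fun pa => Psi (canon a :: pa)) (path fs (map (fun i => nth i f 0%nat) a) G))).
        -- apply (IHG r (map (fun i => nth i f 0%nat) a) (fun pa => Psi (canon a :: pa))). rewrite length_map; auto.
           intros x Hx. apply in_map_iff in Hx as [i [<- Hi]]. apply Hf. apply nth_In. rewrite Lf; auto.
        -- intros fs. rewrite path_cons. auto.
      * apply (KEY n rprev r a (fun q => Ev n N G q (fun pa => Psi (canon a :: pa)))); auto. lia.
    + symmetry. transitivity (sumR (parts n) (fun q => sumR (seq 1 N) (fun r => probR N r *
          (Tr r (canon a) q * Ev n N G q (fun pa => Psi (canon a :: pa)))))).
      * apply sumR_ext; intros. rewrite <- sumR_scal_r. apply sumR_ext; intros; ring.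
      * rewrite sumR_swap. apply sumR_ext; intros. apply sumR_scal.
Qed.

Fixpoint mpow (n : nat) (A : list nat -> list nat -> R) (j : nat) (p q : list nat) : R :=
  match j with
  | O => indb (leqb p q)
  | S j' => sumR (parts n) (fun s => A p s * mpow n A j' s q)
  end.

Lemma kQpow_mpow n j p q : kQpow n j p q = mpow n kQ j p q.
Proof.
  revert p q; induction j; intros; simpl; auto. apply sumR_ext; intros. rewrite IHj; auto.
Qed.

Lemma Ev_scal n N : forall G p c Psi, Ev n N G p (fun pa => c * Psi pa) = c * Ev n N G p Psi.
Proof.
  induction G; intros; simpl; auto. rewrite <- sumR_scal. apply sumR_ext; intros.
  rewrite IHG. lra.
Qed.

Lemma Ev_head n N G p Psi1 Psi2 : (forall pa, Psi1 (p :: pa) = Psi2 (p :: pa)) ->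
  Ev n N G p Psi1 = Ev n N G p Psi2.
Proof.
  intros H. destruct G; simpl; auto. apply sumR_ext; intros. f_equal. apply Ev_ext; auto.
Qed.

Lemma Ev_one n N : (1 <= N)%nat -> forall G p, length p = n -> Ev n N G p (fun _ => 1) = 1.
Proof.
  intros HN. induction G; intros p Hp; simpl; auto.
  rewrite sumR_ext with (g := fun q => PiN N p q).
  apply PiN_rowsum; auto.
  intros q Hq. rewrite IHG. lra. apply in_parts in Hq; tauto.
Qed.

Lemma CK n N : forall g H p (psi : list nat -> R) Psi2, (g <= H)%nat -> In p (parts n) ->
  Ev n N H p (fun pa => psi (nth g pa []) * Psi2 (skipn g pa)) =
  sumR (parts n) (fun q => mpow n (PiN N) g p q * psi q * Ev n N (H - g) q Psi2).
Proof.
  induction g; intros H p psi Psi2 Hg Hp.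
  - rewrite (Ev_head n N H p _ (fun pa => psi p * Psi2 pa)) by (intros; reflexivity).
    rewrite Ev_scal. simpl mpow. rewrite Nat.sub_0_r.
    rewrite sumR_ext with (g := fun q => indb (leqb p q) * (psi q * Ev n N H q Psi2)).
    rewrite sumR_delta_leqb; auto. apply NoDup_parts. intros; lra.
  - destruct H as [|H]; [lia|]. cbn [Ev].
    rewrite sumR_ext with (g := fun s => PiN N p s *
       sumR (parts n) (fun q => mpow n (PiN N) g s q * psi q * Ev n N (H - g) q Psi2)).
    2:{ intros s Hs. f_equal. apply (IHg H s psi Psi2); auto. lia. }
    cbn [mpow]. simpl (S H - S g)%nat.
    rewrite sumR_ext with (g := fun s => sumR (parts n) (fun q => PiN N p s * mpow n (PiN N) g s q * (psi q * Ev n N (H - g) q Psi2))).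
    2:{ intros. rewrite <- sumR_scal. apply sumR_ext; intros; lra. }
    rewrite sumR_swap. apply sumR_ext. intros q _. rewrite sumR_scal_r. lra.
Qed.

Fixpoint PsiObs (gen : R -> nat) (g0 : nat) (obs : list (R * list nat)) : list (list nat) -> R :=
  match obs with
  | [] => fun _ => 1
  | (t, pi) :: obs' => fun pa => indb (leqb (nth (gen t - g0) pa []) pi) *
                                PsiObs gen (gen t) obs' (skipn (gen t - g0) pa)
  end.

Fixpoint sortedg (gen : R -> nat) (g0 : nat) (obs : list (R * list nat)) : Prop :=
  match obs with
  | [] => True
  | (t, _) :: obs' => (g0 <= gen t)%nat /\ sortedg gen (gen t) obs'
  end.

Lemma sortedg_ge gen : forall obs g0, sortedg gen g0 obs -> forall o, In o obs -> (g0 <= gen (fst o))%nat.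
Proof.
  induction obs as [|[t pi] obs IH]; intros g0 S o Ho; simpl in *. contradiction.
  destruct S as [S1 S2]. destruct Ho as [<-|Ho]; simpl; auto.
  specialize (IH _ S2 o Ho). lia.
Qed.

Lemma ind_andb a b : indb (a && b) = indb a * indb b.
Proof. destruct a, b; unfold indb; simpl; lra. Qed.

Lemma PsiObs_forallb gen : forall obs g0 pa, sortedg gen g0 obs ->
  PsiObs gen g0 obs pa = indb (forallb (fun o => leqb (nth (gen (fst o) - g0) pa []) (snd o)) obs).
Proof.
  induction obs as [|[t pi] obs IH]; intros g0 pa S; simpl. unfold indb; simpl; lra.
  destruct S as [S1 S2]. rewrite ind_andb. f_equal. rewrite IH; auto. f_equal.
  apply forallb_ext_in. intros o Ho. rewrite nth_skipn. f_equal. f_equal.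
  pose proof (sortedg_ge gen obs (gen t) S2 o Ho). lia.
Qed.

Fixpoint kfddM (n N : nat) (gen : R -> nat) (g0 : nat) (p : list nat) (obs : list (R * list nat)) : R :=
  match obs with
  | [] => 1
  | (t, pi) :: obs' => mpow n (PiN N) (gen t - g0) p pi * kfddM n N gen (gen t) pi obs'
  end.

Lemma Ev_obs n N gen : (1 <= N)%nat -> forall obs g0 H p, sortedg gen g0 obs ->
  (forall o, In o obs -> (gen (fst o) - g0 <= H)%nat) -> In p (parts n) ->
  Forall (fun o => In (snd o) (parts n)) obs ->
  Ev n N H p (PsiObs gen g0 obs) = kfddM n N gen g0 p obs.
Proof.
  intros HN. induction obs as [|[t pi] obs IH]; intros g0 H p S HH Hp Fa.
  - simpl. apply Ev_one; auto. apply in_parts in Hp; tauto.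
  - simpl PsiObs. simpl kfddM. inversion Fa; subst. simpl in H2.
    destruct S as [S1 S2].
    rewrite (CK n N (gen t - g0) H p (fun q => indb (leqb q pi)) (PsiObs gen (gen t) obs)); auto. 2:{ apply (HH (t, pi)); left; auto. }
    rewrite sumR_ext with (g := fun q => indb (leqb q pi) * (mpow n (PiN N) (gen t - g0) p q *
           Ev n N (H - (gen t - g0)) q (PsiObs gen (gen t) obs))).
    2:{ intros; lra. }
    rewrite sumR_delta_leqb'; auto. 2: apply NoDup_parts.
    f_equal. apply IH; auto.
    intros o Ho. pose proof (HH o (or_intror Ho)). pose proof (HH (t,pi) (or_introl eq_refl)). simpl in *.
    pose proof (sortedg_ge gen obs (gen t) S2 o Ho). lia.
Qed.

Lemma nth_path fs a G g : (g <= G)%nat -> nth g (path fs a G) [] = canon (map (anc fs g) a).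
Proof.
  intros Hg. unfold path.
  rewrite (nth_map_lt _ _ _ 0%nat) by (rewrite length_seq; lia).
  rewrite seq_nth by lia. auto.
Qed.

Lemma horizon_ge N obs o : In o obs -> (gen_of N (fst o) <= horizon N obs)%nat.
Proof.
  induction obs; simpl; intros H. contradiction. destruct H as [<-|H]. lia. specialize (IHobs H). lia.
Qed.

Lemma wf_fdd_kfddM N n r0 obs : (1 <= N)%nat -> (n <= r0)%nat ->
  sortedg (gen_of N) 0 obs -> Forall (fun o => In (snd o) (parts n)) obs ->
  wf_fdd N n r0 obs = kfddM n N (gen_of N) 0 (singletons n) obs.
Proof.
  intros HN Hr S Fa. unfold wf_fdd.
  rewrite (wf_exp_ext N _ r0 _ (fun fs => PsiObs (gen_of N) 0 obs (path fs (seq 0 n) (horizon N obs)))).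
  2:{ intros fs. rewrite PsiObs_forallb; auto. unfold indb.
      erewrite forallb_ext_in; [reflexivity|].
      intros o Ho. cbv beta. rewrite Nat.sub_0_r. rewrite nth_path. reflexivity.
      apply horizon_ge; auto. }
  rewrite (wf_Ev n N). 2: apply length_seq. 2:{ intros x Hx; apply in_seq in Hx; lia. }
  assert (canon (seq 0 n) = singletons n) by (pose proof (singletons_in_parts n) as SP; apply in_parts in SP; unfold singletons in *; tauto).
  rewrite H. apply Ev_obs; auto.
  intros o Ho. rewrite Nat.sub_0_r. apply horizon_ge; auto. apply singletons_in_parts.
Qed.

Lemma cmap_inj n p h : In p (parts n) -> length h = kb p -> NoDup h -> cmap h p = p.
Proof.
  intros Hp Lh ND. unfold cmap. rewrite canon_relabel.
  - apply in_parts in Hp; tauto.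
  - intros x y Hx Hy E. rewrite (NoDup_nth h 0%nat) in ND. apply ND; auto.
    rewrite Lh; eapply parts_bound; eauto. rewrite Lh; eapply parts_bound; eauto.
Qed.

Lemma cmap_ker n p h a b : In p (parts n) -> length h = kb p -> (a < b)%nat -> (b < kb p)%nat ->
  nth a h 0%nat = nth b h 0%nat -> NoDup (del b h) -> cmap h p = merge p a b.
Proof.
  intros Hp Lh Hab Hb E ND. unfold cmap, merge.
  set (g := fun x => if Nat.eqb x b then a else x).
  assert (M : map (fun i => nth i h 0%nat) p = map (fun i => nth i h 0%nat) (map g p)).
  { rewrite map_map. apply map_ext. intros x. unfold g. destruct (Nat.eqb_spec x b); subst; auto. }
  rewrite M. apply canon_relabel.
  intros x y Hx Hy Exy. apply in_map_iff in Hx as [x' [<- Hx']]. apply in_map_iff in Hy as [y' [<- Hy']].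
  pose proof (parts_bound n p x' Hp Hx'). pose proof (parts_bound n p y' Hp Hy').
  apply (del_inj b h 0%nat); auto; try lia; unfold g;
  try (destruct (Nat.eqb_spec x' b); lia); try (destruct (Nat.eqb_spec y' b); lia).
Qed.

Lemma canon_eq_pos l i j : (i < length l)%nat -> (j < length l)%nat ->
  nth i l 0%nat = nth j l 0%nat -> nth i (canon l) 0%nat = nth j (canon l) 0%nat.
Proof.
  intros Hi Hj E. rewrite canon_idx. rewrite !(nth_map_lt _ _ _ 0%nat) by auto. rewrite E; auto.
Qed.

Lemma merge_ne n p a b : In p (parts n) -> (a < b)%nat -> (b < kb p)%nat -> merge p a b <> p.
Proof.
  intros Hp Hab Hb E.
  destruct (In_nth p a 0%nat (parts_label n p a Hp ltac:(lia))) as [i [Hi Ei]].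
  destruct (In_nth p b 0%nat (parts_label n p b Hp Hb)) as [j [Hj Ej]].
  assert (nth i (merge p a b) 0%nat = nth j (merge p a b) 0%nat).
  { unfold merge. apply canon_eq_pos; rewrite ?length_map; auto.
    rewrite !(nth_map_lt _ _ _ 0%nat) by auto. rewrite Ei, Ej. rewrite Nat.eqb_refl.
    destruct (Nat.eqb_spec a b); lia. }
  rewrite E in H. lia.
Qed.

Lemma merge_parts n p a b : length p = n -> In (merge p a b) (parts n).
Proof. intros. unfold merge. apply canon_in_parts. rewrite length_map; auto. Qed.

Definition kerbool (h : list nat) (a b : nat) : bool :=
  (Nat.eqb (nth a h 0%nat) (nth b h 0%nat)) && (if NoDup_dec Nat.eq_dec (del b h) then true else false).

Lemma kerbool_spec h a b : kerbool h a b = true <-> nth a h 0%nat = nth b h 0%nat /\ NoDup (del b h).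
Proof.
  unfold kerbool. rewrite Bool.andb_true_iff, Nat.eqb_eq. destruct (NoDup_dec Nat.eq_dec (del b h)); split; intuition; discriminate.
Qed.

Lemma ker_excl h a b a' b' : (a < b)%nat -> (b < length h)%nat -> (a' < b')%nat -> (b' < length h)%nat ->
  kerbool h a b = true -> kerbool h a' b' = true -> a = a' /\ b = b'.
Proof.
  intros H1 H2 H3 H4 K1 K2. apply kerbool_spec in K1 as [E1 N1]. apply kerbool_spec in K2 as [E2 N2].
  assert (Hb : b = b').
  { destruct (Nat.eq_dec b b') as [|Hne]; auto. exfalso.
    destruct (Nat.eq_dec a' b) as [Ea|Ea].
    - subst a'. assert (a = b') by (apply (del_inj b h 0%nat); try lia; try congruence; auto). lia.
    - destruct (Nat.eq_dec b' b); [lia|].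
      assert (a' = b') by (apply (del_inj b h 0%nat); try lia; auto). lia. }
  subst b'. split; auto. apply (del_inj b h 0%nat); try lia; try congruence; auto.
Qed.

Definition pairs (k : nat) : list (nat * nat) :=
  flat_map (fun b => map (fun a => (a, b)) (seq 0 b)) (seq 0 k).

Lemma sumR_pairs k (F : nat -> nat -> R) :
  sumR (seq 0 k) (fun b => sumR (seq 0 b) (fun a => F a b)) = sumR (pairs k) (fun ab => F (fst ab) (snd ab)).
Proof. unfold pairs. rewrite sumR_flat_map. apply sumR_ext; intros. rewrite sumR_map. auto. Qed.

Lemma in_pairs k a b : In (a, b) (pairs k) <-> (a < b)%nat /\ (b < k)%nat.
Proof.
  unfold pairs. rewrite in_flat_map. split.
  - intros [b' [Hb Hm]]. apply in_map_iff in Hm as [a' [E Ha]]. inversion E; subst.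
    apply in_seq in Hb, Ha. lia.
  - intros [Ha Hb]. exists b. split. apply in_seq; lia. apply in_map_iff. exists a. split; auto. apply in_seq; lia.
Qed.

Lemma NoDup_pairs k : NoDup (pairs k).
Proof.
  unfold pairs. assert (forall l, NoDup l -> NoDup (flat_map (fun b => map (fun a => (a, b)) (seq 0 b)) l)).
  { induction l; intros ND; simpl. constructor. inversion ND; subst. apply NoDup_app; auto.
    - apply NoDup_map_NoDup_ForallPairs. intros x y _ _ E; inversion E; auto. apply seq_NoDup.
    - intros [x y] G1 G2. apply in_map_iff in G1 as [? [E1 _]]. inversion E1; subst.
      apply in_flat_map in G2 as [z [Hz G2]]. apply in_map_iff in G2 as [? [E2 _]]. inversion E2; subst. contradiction. }
  apply H, seq_NoDup.
Qed.

Lemma pairs_count k : sumR (pairs k) (fun _ => 1) = INR (k * (k - 1) / 2).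
Proof.
  assert (E := sumR_pairs k (fun _ _ => 1)). cbv beta in E. rewrite <- E. clear E.
  induction k. simpl. unfold sumR; simpl; auto.
  rewrite seq_S, sumR_app, IHk. simpl (0 + k)%nat. rewrite sumR_cons, sumR_nil, sumR_const, length_seq.
  replace (S k * (S k - 1))%nat with (k * (k - 1) + k * 2)%nat.
  rewrite Nat.div_add by lia. rewrite plus_INR. lra.
  destruct k; simpl; lia.
Qed.

Lemma sumR_seq_INR k : sumR (seq 0 k) (fun i => INR i) = INR (k * (k - 1) / 2).
Proof.
  rewrite <- pairs_count. assert (E := sumR_pairs k (fun _ _ => 1)). cbv beta in E. rewrite <- E. apply sumR_ext. intros b _. rewrite sumR_const, length_seq. lra.
Qed.

Lemma sumR_ind_le1' {X} (l : list X) (P : X -> bool) :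
  NoDup l -> (forall x y, In x l -> In y l -> P x = true -> P y = true -> x = y) ->
  sumR l (fun x => indb (P x)) <= 1.
Proof.
  induction l; intros ND H. rewrite sumR_nil; lra.
  rewrite sumR_cons. inversion ND; subst.
  destruct (P a) eqn:E; unfold indb at 1.
  - rewrite sumR_ext with (g := fun _ => 0). rewrite sumR_zero; lra.
    intros x Hx. destruct (P x) eqn:E2; unfold indb; auto.
    exfalso. assert (x = a) by (apply H; simpl; auto). subst; auto.
  - assert (sumR l (fun x => indb (P x)) <= 1); [|lra].
    apply IHl; auto. intros; apply H; simpl; auto.
Qed.

Lemma sumR_single_le {X} (l : list X) f x : In x l -> (forall y, In y l -> 0 <= f y) -> f x <= sumR l f.
Proof.
  induction l as [|a l IHl]; intros Hx H; [destruct Hx|]. destruct Hx as [<-|Hx]; rewrite sumR_cons.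
  - assert (0 <= sumR l f) by (apply sumR_nonneg; intros; apply H; right; auto). lra.
  - assert (f x <= sumR l f) by (apply IHl; auto; intros; apply H; right; auto).
    assert (0 <= f a) by (apply H; left; auto). lra.
Qed.

Lemma ff_upper r : (1 <= r)%nat -> forall k, 0 <= INR (ffn r k) * (/ INR r) ^ k <= 1.
Proof.
  intros Hr. assert (0 < INR r) by (apply lt_0_INR; lia).
  induction k; simpl. lra.
  rewrite mult_INR. destruct IHk as [I1 I2].
  assert (0 <= INR (r - k) <= INR r) by (split; [apply pos_INR | apply le_INR; lia]).
  replace (INR (ffn r k) * INR (r - k) * (/ INR r * (/ INR r) ^ k)) with
    ((INR (ffn r k) * (/ INR r) ^ k) * (INR (r - k) / INR r)) by (unfold Rdiv; ring).
  assert (0 <= INR (r - k) / INR r <= 1).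
  { split. apply Rdiv_le_0_compat; lra. apply Rdiv_le_1; lra. }
  split. apply Rmult_le_pos; lra. rewrite <- (Rmult_1_r 1). apply Rmult_le_compat; lra.
Qed.

Lemma ff_lower r : (1 <= r)%nat -> forall k, (k <= r)%nat ->
  1 - sumR (seq 0 k) (fun i => INR i) / INR r <= INR (ffn r k) * (/ INR r) ^ k.
Proof.
  intros Hr. assert (0 < INR r) by (apply lt_0_INR; lia).
  induction k; intros Hk. { simpl. unfold sumR; simpl; unfold Rdiv; lra. }
  cbn [ffn pow]. rewrite seq_S, sumR_app, sumR_cons, sumR_nil. simpl (0 + k)%nat.
  rewrite mult_INR. rewrite minus_INR by lia.
  specialize (IHk ltac:(lia)).
  replace (INR (ffn r k) * (INR r - INR k) * (/ INR r * (/ INR r) ^ k)) with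
    ((INR (ffn r k) * (/ INR r) ^ k) * (1 - INR k / INR r)) by (field; lra).
  assert (0 <= 1 - INR k / INR r).
  { assert (INR k / INR r <= 1) by (apply Rdiv_le_1; [lra| apply le_INR; lia]). lra. }
  assert (0 <= INR k / INR r) by (apply Rdiv_le_0_compat; [apply pos_INR|lra]).
  set (S := sumR (seq 0 k) (fun i => INR i)) in *.
  assert (0 <= S / INR r) by (apply Rdiv_le_0_compat; [apply sumR_nonneg; intros; apply pos_INR|lra]).
  apply Rle_trans with ((1 - S / INR r) * (1 - INR k / INR r)).
  - replace ((S + (INR k + 0)) / INR r) with (S / INR r + INR k / INR r) by (field; lra). nra.
  - apply Rmult_le_compat_r; auto.
Qed.

Definition mq (p q : list nat) : R :=
  sumR (pairs (kb p)) (fun ab => indb (leqb (merge p (fst ab) (snd ab)) q)).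

Lemma kQ_eq p q : kQ p q = if leqb p q then - INR (kb p * (kb p - 1) / 2) else mq p q.
Proof.
  unfold kQ, mq. rewrite nblocks_kb. destruct (leqb p q); auto.
  rewrite sumR_pairs. reflexivity.
Qed.

Section Est.
Variable n : nat.
Variable p : list nat.
Hypothesis Hp : In p (parts n).

Let k := kb p.
Let Lp : length p = n.
Proof. apply in_parts in Hp; tauto. Qed.

Lemma mq_p : mq p p = 0.
Proof.
  unfold mq. rewrite sumR_ext with (g := fun _ => 0). apply sumR_zero.
  intros [a b] Hab. apply in_pairs in Hab. simpl. unfold indb.
  destruct (leqb (merge p a b) p) eqn:E; auto. apply leqb_eq in E. exfalso; destruct Hab; eapply (merge_ne n p a b); eauto.
Qed.

Lemma mq_sum : sumR (parts n) (fun q => mq p q) = INR (k * (k - 1) / 2).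
Proof.
  unfold mq. rewrite sumR_swap. rewrite <- pairs_count. apply sumR_ext. intros [a b] _.
  simpl. rewrite sumR_ext with (g := fun q => indb (leqb (merge p a b) q) * 1) by (intros; ring).
  apply sumR_delta_leqb. apply NoDup_parts. apply merge_parts; auto.
Qed.

Lemma mq_sum' : sumR (parts n) (mq p) = INR (k * (k - 1) / 2).
Proof. exact mq_sum. Qed.

Lemma mq_nonneg q : 0 <= mq p q.
Proof. unfold mq. apply sumR_nonneg. intros. unfold indb; destruct leqb; lra. Qed.

Lemma mq_le q : mq p q <= INR (k * (k - 1) / 2).
Proof.
  rewrite <- pairs_count. unfold mq. apply sumR_le. intros. unfold indb; destruct leqb; lra.
Qed.

Lemma Tr_lower_p r : (1 <= r)%nat -> INR (ffn r k) * (/ INR r) ^ k <= Tr r p p.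
Proof.
  intros Hr. unfold Tr. fold k. rewrite <- count_inj. rewrite Rmult_comm. apply Rmult_le_compat_l.
  apply pow_le. left; apply Rinv_0_lt_compat, lt_0_INR; lia.
  apply sumR_le. intros h Hh. apply in_seqs in Hh as [Lh _].
  destruct (NoDup_dec Nat.eq_dec h). rewrite cmap_inj with (n := n); auto. rewrite leqb_refl; unfold indb; lra.
  unfold indb; destruct leqb; lra.
Qed.

Lemma Tr_lower_q r q : (1 <= r)%nat -> (1 <= k)%nat ->
  mq p q * (INR (ffn r (k - 1)) * (/ INR r) ^ k) <= Tr r p q.
Proof.
  intros Hr Hk. unfold Tr. fold k.
  replace (mq p q * (INR (ffn r (k - 1)) * (/ INR r) ^ k)) with
    ((/ INR r) ^ k * sumR (pairs k) (fun ab => indb (leqb (merge p (fst ab) (snd ab)) q) * INR (ffn r (k - 1)))).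
  2:{ rewrite sumR_scal_r. unfold mq. fold k. ring. }
  apply Rmult_le_compat_l. apply pow_le. left; apply Rinv_0_lt_compat, lt_0_INR; lia.
  rewrite sumR_ext with (g := fun ab => sumR (seqs r k) (fun h =>
      indb (leqb (merge p (fst ab) (snd ab)) q) * indb (kerbool h (fst ab) (snd ab)))).
  2:{ intros [a b] Hab. apply in_pairs in Hab. simpl. rewrite sumR_scal.
      f_equal. rewrite <- (count_ker r (k - 1) a b) by lia. replace (S (k - 1)) with k by lia.
      apply sumR_ext. intros h _. unfold indb, kerbool.
      destruct (Nat.eq_dec (nth a h 0%nat) (nth b h 0%nat)) as [E|E].
      - rewrite (proj2 (Nat.eqb_eq _ _) E). simpl. destruct (NoDup_dec Nat.eq_dec (del b h)); auto.
      - destruct (Nat.eqb_spec (nth a h 0%nat) (nth b h 0%nat)); [contradiction|]. simpl; auto. }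
  rewrite sumR_swap. apply sumR_le. intros h Hh. apply in_seqs in Hh as [Lh _].
  rewrite sumR_ext with (g := fun ab => indb (leqb (cmap h p) q) * indb (kerbool h (fst ab) (snd ab))).
  2:{ intros [a b] Hab. apply in_pairs in Hab. simpl. unfold indb at 2 4.
      destruct (kerbool h a b) eqn:K; [|ring].
      apply kerbool_spec in K as [K1 K2]. rewrite cmap_ker with (n := n) (a := a) (b := b); auto; tauto. }
  rewrite sumR_scal. rewrite <- Rmult_1_r. apply Rmult_le_compat_l.
  unfold indb; destruct leqb; lra.
  apply sumR_ind_le1'. apply NoDup_pairs.
  intros [a b] [a' b'] H1 H2 K1 K2. apply in_pairs in H1, H2. simpl in *.
  destruct (ker_excl h a b a' b'); try lia; auto; subst; auto.
Qed.

Lemma Tr_nonneg r q : (1 <= r)%nat -> 0 <= Tr r p q.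
Proof.
  intros Hr. unfold Tr. apply Rmult_le_pos. apply pow_le. left; apply Rinv_0_lt_compat, lt_0_INR; lia.
  apply sumR_nonneg. intros; unfold indb; destruct leqb; lra.
Qed.

Lemma sum_off (X : list nat -> R) :
  sumR (parts n) (fun q => indb (negb (leqb p q)) * X q) = sumR (parts n) X - X p.
Proof.
  rewrite <- (sumR_delta_leqb (parts n) p X (NoDup_parts n) Hp).
  rewrite <- sumR_minus. apply sumR_ext; intros. unfold indb. destruct (leqb p x); simpl; ring.
Qed.

Lemma Tr_le1 r q : (1 <= r)%nat -> In q (parts n) -> Tr r p q <= 1.
Proof.
  intros Hr Hq. rewrite <- (Tr_rowsum n r p Hr Lp). apply sumR_single_le; auto.
  intros; apply Tr_nonneg; auto.
Qed.

Lemma Tr_est : exists K0, 0 <= K0 /\ forall q r, In q (parts n) -> (1 <= r)%nat ->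
  Rabs (Tr r p q - indb (leqb p q) - kQ p q / INR r) <= K0 / (INR r) ^ 2.
Proof.
  set (Cc := INR (k * (k - 1) / 2)).
  assert (C0 : 0 <= Cc) by apply pos_INR.
  exists (2 * Cc ^ 2 + (2 + Cc) * INR k ^ 2). split. nra.
  intros q r Hq Hr.
  assert (Rp : 0 < INR r) by (apply lt_0_INR; lia).
  assert (E2 : 0 < INR r ^ 2) by nra.
  rewrite kQ_eq. fold k. fold Cc.
  destruct (le_lt_dec k r) as [Hkr|Hkr].
  2:{
    assert (Hk1 : 1 <= INR k / INR r).
    { apply Rdiv_ge_1; [lra|]. apply le_INR; lia. }
    assert (Hk2 : 1 <= INR k ^ 2 / INR r ^ 2).
    { replace (INR k ^ 2 / INR r ^ 2) with ((INR k / INR r) ^ 2) by (field; lra). nra. }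
    assert (Hinv : / INR r <= 1).
    { rewrite <- Rinv_1. apply Rinv_le_contravar; [lra|]. apply (le_INR 1); lia. }
    pose proof (Tr_nonneg r q Hr). pose proof (Tr_le1 r q Hr Hq).
    pose proof (mq_nonneg q). pose proof (mq_le q). fold k Cc in H2.
    assert (B : Rabs (Tr r p q - indb (leqb p q) - (if leqb p q then - Cc else mq p q) / INR r) <= 2 + Cc).
    { assert (X1 : 0 <= Cc * / INR r <= Cc).
      { split; [apply Rmult_le_pos; [lra| left; apply Rinv_0_lt_compat; lra]|].
        rewrite <- (Rmult_1_r Cc) at 2; apply Rmult_le_compat_l; lra. }
      assert (X2 : 0 <= mq p q * / INR r <= mq p q).
      { split; [apply Rmult_le_pos; [lra| left; apply Rinv_0_lt_compat; lra]|].
        rewrite <- (Rmult_1_r (mq p q)) at 2; apply Rmult_le_compat_l; lra. }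
      unfold Rdiv. destruct (leqb p q); unfold indb; apply Rabs_le; split; lra. }
    eapply Rle_trans; [apply B|].
    replace ((2 * Cc ^ 2 + (2 + Cc) * INR k ^ 2) / INR r ^ 2) with
      (2 * Cc ^ 2 / INR r ^ 2 + (2 + Cc) * (INR k ^ 2 / INR r ^ 2)) by (field; lra).
    assert (0 <= 2 * Cc ^ 2 / INR r ^ 2) by (apply Rdiv_le_0_compat; nra). nra. }
  destruct (Nat.eq_dec k 0) as [Ek|Ek].
  {
    assert (K0 : kb p = 0%nat) by exact Ek.
    unfold Tr. rewrite K0. simpl seqs. rewrite sumR_cons, sumR_nil.
    rewrite cmap_inj with (n := n); auto. 2: constructor.
    assert (Cc = 0) by (unfold Cc; rewrite Ek; simpl; auto).
    unfold mq. rewrite K0. change (pairs 0) with (@nil (nat * nat)). rewrite sumR_nil.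
    destruct (leqb p q); unfold indb; rewrite H;
    match goal with |- Rabs ?x <= _ => replace x with 0 by (simpl; field; lra) end; rewrite Rabs_R0;
    apply Rdiv_le_0_compat; nra. }
  set (f0 := INR (ffn r k) * (/ INR r) ^ k).
  set (f1 := INR (ffn r (k - 1)) * (/ INR r) ^ (k - 1)).
  set (A := INR (ffn r (k - 1)) * (/ INR r) ^ k).
  assert (HA : A = f1 / INR r).
  { unfold A, f1. replace k with (S (k - 1)) at 2 by lia. simpl pow. field. lra. }
  assert (F0 : 1 - Cc / INR r <= f0).
  { unfold f0, Cc. rewrite <- sumR_seq_INR. apply ff_lower; auto. }
  assert (F1 : 1 - Cc / INR r <= f1 <= 1).
  { split. 2: apply ff_upper; auto.
    eapply Rle_trans; [|apply ff_lower; auto; lia].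
    unfold Cc. rewrite <- !sumR_seq_INR. replace k with (S (k - 1)) at 1 by lia. rewrite seq_S, sumR_app.
    assert (0 <= sumR [(0 + (k - 1))%nat] (fun i => INR i) / INR r).
    { apply Rdiv_le_0_compat; auto. apply sumR_nonneg; intros; apply pos_INR. }
    unfold Rdiv in *. rewrite Rmult_plus_distr_r. lra. }
  assert (Tp : f0 <= Tr r p p) by (apply Tr_lower_p; auto).
  assert (Tq : forall q', mq p q' * A <= Tr r p q') by (intros; apply Tr_lower_q; auto; lia).
  assert (Soff : sumR (parts n) (fun q' => indb (negb (leqb p q')) * (Tr r p q' - mq p q' * A)) =
                 1 - Tr r p p - Cc * A).
  { rewrite sum_off. rewrite sumR_minus, Tr_rowsum with (n := n) by auto. rewrite sumR_scal_r. first [rewrite mq_sum | rewrite mq_sum']. fold Cc.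
    rewrite mq_p. ring. }
  assert (Snn : forall q', In q' (parts n) -> 0 <= indb (negb (leqb p q')) * (Tr r p q' - mq p q' * A)).
  { intros q' _. specialize (Tq q'). unfold indb; destruct (negb (leqb p q')); nra. }
  assert (Spos : 0 <= 1 - Tr r p p - Cc * A).
  { rewrite <- Soff. apply sumR_nonneg; auto. }
  assert (Rinvp : 0 < / INR r) by (apply Rinv_0_lt_compat; lra).
  assert (CA : Cc * (1 - f1) / INR r <= Cc ^ 2 / INR r ^ 2).
  { replace (Cc ^ 2 / INR r ^ 2) with (Cc * (Cc / INR r) / INR r) by (field; lra).
    unfold Rdiv. apply Rmult_le_compat_r. lra. apply Rmult_le_compat_l; auto. unfold Rdiv in F1. lra. }
  assert (Kb : Cc ^ 2 / INR r ^ 2 <= (2 * Cc ^ 2 + (2 + Cc) * INR k ^ 2) / INR r ^ 2).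
  { unfold Rdiv. apply Rmult_le_compat_r. left; apply Rinv_0_lt_compat; auto.
    assert (0 <= (2 + Cc) * INR k ^ 2) by (apply Rmult_le_pos; [lra|apply pow2_ge_0]). nra. }
  destruct (leqb p q) eqn:Epq.
  - apply leqb_eq in Epq. subst q. unfold indb.
    assert (L : 0 <= Tr r p p - 1 - - Cc / INR r).
    { unfold Rdiv in *. lra. }
    assert (U : Tr r p p - 1 - - Cc / INR r <= Cc * (1 - f1) / INR r).
    { rewrite HA in Spos. unfold Rdiv in *. nra. }
    rewrite Rabs_right by lra. eapply Rle_trans; [apply U|]. eapply Rle_trans; [apply CA|]. exact Kb.
  - unfold indb. rewrite Rminus_0_r.
    assert (Tq' := Tq q).
    assert (Up : Tr r p q - mq p q * A <= 1 - Tr r p p - Cc * A).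
    { rewrite <- Soff. eapply Rle_trans; [|apply (sumR_single_le _ _ q Hq Snn)].
      rewrite Epq. simpl. lra. }
    pose proof (mq_nonneg q). pose proof (mq_le q). fold Cc in H0.
    assert (M1 : 0 <= mq p q * (1 - f1) / INR r <= Cc * (1 - f1) / INR r).
    { unfold Rdiv. split. apply Rmult_le_pos; [apply Rmult_le_pos|]; lra.
      apply Rmult_le_compat_r; [lra|]. apply Rmult_le_compat_r; lra. }
    assert (U2 : 1 - Tr r p p - Cc * A <= Cc * (1 - f1) / INR r).
    { rewrite HA. unfold Rdiv in *. nra. }
    rewrite HA in *.
    assert (D : Tr r p q - mq p q / INR r = (Tr r p q - mq p q * (f1 / INR r)) - mq p q * (1 - f1) / INR r)
      by (field; lra).
    rewrite D. apply Rabs_le. split.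
    + unfold Rdiv in *. nra.
    + unfold Rdiv in *. nra.
Qed.

End Est.

Lemma nat_gt x : exists N : nat, x < INR N.
Proof. destruct (INR_archimed 1 x) as [N HN]; [lra|]. exists N. lra. Qed.

Lemma ln_le' x y : 0 < x -> x <= y -> ln x <= ln y.
Proof. intros. destruct (Req_dec x y). subst; lra. left; apply ln_increasing; lra. Qed.

Lemma ln_le_x x : 0 < x -> ln x <= x - 1.
Proof.
  intros. pose proof (exp_ineq1_le (x - 1)). replace (1 + (x - 1)) with x in H0 by ring.
  rewrite <- (ln_exp (x - 1)). apply ln_le'; auto.
Qed.

Definition Hn (N : nat) : R := sumR (seq 1 N) (fun i => / INR i).

Lemma Hn_S N : Hn (S N) = Hn N + / INR (S N).
Proof. unfold Hn. rewrite seq_S, sumR_app, sumR_cons, sumR_nil. simpl (1 + N)%nat. ring. Qed.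

Lemma CN_eq N : (1 <= N)%nat -> CN N = Hn N / INR N.
Proof.
  intros HN. unfold CN, Hn. unfold Rdiv. rewrite <- sumR_scal_r. apply sumR_ext.
  intros i Hi. apply in_seq in Hi. unfold probR.
  replace ((1 <=? i)%nat && (i <=? N)%nat)%bool with true; auto.
  symmetry. apply andb_true_intro; split; apply Nat.leb_le; lia.
Qed.

Lemma Hn_lower N : ln (INR N + 1) <= Hn N.
Proof.
  induction N. simpl. unfold Hn; simpl. rewrite Rplus_0_l, ln_1. unfold sumR; simpl; lra.
  rewrite Hn_S, S_INR.
  assert (P : 0 < INR N + 1) by (pose proof (pos_INR N); lra).
  replace (INR N + 1 + 1) with ((INR N + 1) * ((INR N + 1 + 1) / (INR N + 1))) by (field; lra).
  rewrite ln_mult by (try apply Rdiv_lt_0_compat; lra).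
  pose proof (ln_le_x ((INR N + 1 + 1) / (INR N + 1)) ltac:(apply Rdiv_lt_0_compat; lra)).
  replace ((INR N + 1 + 1) / (INR N + 1) - 1) with (/ (INR N + 1)) in H by (field; lra). lra.
Qed.

Lemma Hn_upper N : (1 <= N)%nat -> Hn N <= 1 + ln (INR N).
Proof.
  intros HN. induction N. lia.
  destruct N. unfold Hn; simpl. rewrite ln_1. unfold sumR; simpl. lra.
  rewrite Hn_S. specialize (IHN ltac:(lia)).
  assert (P : 0 < INR (S N)) by (apply lt_0_INR; lia).
  assert (E : ln (INR (S N)) = ln (INR (S N) + 1) + ln (INR (S N) / (INR (S N) + 1))).
  { rewrite <- ln_mult; [f_equal; field; lra | lra | apply Rdiv_lt_0_compat; lra]. }
  pose proof (ln_le_x (INR (S N) / (INR (S N) + 1)) ltac:(apply Rdiv_lt_0_compat; lra)).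
  replace (INR (S N) / (INR (S N) + 1) - 1) with (- / (INR (S N) + 1)) in H by (field; lra).
  rewrite (S_INR (S N)). lra.
Qed.

Lemma Hn_pos N : (1 <= N)%nat -> 0 < Hn N.
Proof.
  intros. pose proof (Hn_lower N). assert (1 < INR N + 1) by (pose proof (le_INR 1 N H); simpl in *; lra).
  pose proof (ln_increasing 1 (INR N + 1) ltac:(lra) H1). rewrite ln_1 in H2. lra.
Qed.

Lemma ln_large M : exists N0, forall N, (N0 <= N)%nat -> M < ln (INR N).
Proof.
  destruct (nat_gt (exp M)) as [N0 HN0]. exists N0. intros N HN.
  pose proof (exp_pos M). pose proof (le_INR _ _ HN).
  rewrite <- (ln_exp M). apply ln_increasing; lra.
Qed.

Lemma Hn_large M : exists N0, forall N, (N0 <= N)%nat -> M < Hn N.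
Proof.
  destruct (ln_large M) as [N0 HN0]. exists (S N0). intros N HN.
  specialize (HN0 N ltac:(lia)). pose proof (Hn_lower N).
  assert (0 < INR N) by (apply lt_0_INR; lia).
  pose proof (ln_increasing (INR N) (INR N + 1) H0 ltac:(lra)). lra.
Qed.

Theorem part1 : Un_cv (fun N => CN N / (ln (INR N) / INR N)) 1.
Proof.
  intros eps Heps.
  destruct (ln_large (/ eps)) as [N0 HN0].
  exists (Nat.max N0 2). intros N HN. unfold Rdist.
  assert (HN2 : (2 <= N)%nat) by lia.
  assert (P : 0 < INR N) by (apply lt_0_INR; lia).
  specialize (HN0 N ltac:(lia)).
  assert (Pinv : 0 < / eps) by (apply Rinv_0_lt_compat; lra).
  assert (L : 0 < ln (INR N)) by lra.
  rewrite CN_eq by lia.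
  replace (Hn N / INR N / (ln (INR N) / INR N)) with (Hn N / ln (INR N)) by (field; lra).
  pose proof (Hn_upper N ltac:(lia)). pose proof (Hn_lower N).
  pose proof (ln_increasing (INR N) (INR N + 1) P ltac:(lra)).
  replace (Hn N / ln (INR N) - 1) with ((Hn N - ln (INR N)) / ln (INR N)) by (field; lra).
  apply Rabs_def1.
  - apply Rle_lt_trans with (1 / ln (INR N)).
    + unfold Rdiv. apply Rmult_le_compat_r. left; apply Rinv_0_lt_compat; lra. lra.
    + apply Rmult_lt_reg_r with (ln (INR N)); auto. unfold Rdiv. rewrite Rmult_assoc, Rinv_l, Rmult_1_r by lra.
      apply Rmult_lt_compat_l with (r := eps) in HN0; auto. rewrite Rinv_r in HN0 by lra. lra.
  - apply Rlt_le_trans with 0; [lra|]. apply Rdiv_le_0_compat; lra.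
Qed.

Lemma Hn_over_N : Un_cv (fun N => Hn N / INR N) 0.
Proof.
  intros eps Heps.
  destruct (nat_gt (9 / (eps * eps))) as [N0 HN0]. exists (S N0). intros N HN. unfold Rdist.
  assert (P1 : 1 <= INR N) by (apply (le_INR 1); lia).
  assert (HN' : INR N0 < INR N) by (apply lt_INR; lia).
  pose proof (Hn_upper N ltac:(lia)). pose proof (Hn_pos N ltac:(lia)).
  set (s := sqrt (INR N)).
  assert (Hs : s * s = INR N) by (apply sqrt_sqrt; lra).
  assert (Hs1 : 1 <= s).
  { unfold s. rewrite <- sqrt_1. apply sqrt_le_1_alt. lra. }
  assert (Hln : ln (INR N) <= 2 * s).
  { rewrite <- Hs. rewrite ln_mult by lra. pose proof (ln_le_x s ltac:(lra)). lra. }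
  rewrite Rminus_0_r, Rabs_right by (left; apply Rdiv_lt_0_compat; lra).
  apply Rle_lt_trans with (3 * s / INR N).
  - unfold Rdiv. apply Rmult_le_compat_r. left; apply Rinv_0_lt_compat; lra. lra.
  - rewrite <- Hs. replace (3 * s / (s * s)) with (3 / s) by (field; lra).
    assert (9 / (eps * eps) < s * s) by lra.
    assert (3 / eps < s).
    { apply Rnot_le_lt. intros C. assert (0 < 3 / eps) by (apply Rdiv_lt_0_compat; lra).
      assert (s * s <= (3 / eps) * (3 / eps)) by (apply Rmult_le_compat; lra).
      replace (3 / eps * (3 / eps)) with (9 / (eps * eps)) in H3 by (field; lra). lra. }
    apply Rmult_lt_reg_r with s; [lra|]. unfold Rdiv. rewrite Rmult_assoc, Rinv_l by lra.
    apply Rmult_lt_compat_l with (r := eps) in H2; auto. unfold Rdiv in H2.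
    replace (eps * (3 * / eps)) with 3 in H2 by (field; lra). lra.
Qed.

Lemma CN_cv0 : Un_cv (fun N => CN N) 0.
Proof.
  intros eps Heps. destruct (Hn_over_N eps Heps) as [N0 HN0]. exists (S N0). intros N HN.
  rewrite CN_eq by lia. apply HN0. lia.
Qed.

Lemma CN_pos N : (1 <= N)%nat -> 0 < CN N.
Proof. intros. rewrite CN_eq by auto. apply Rdiv_lt_0_compat. apply Hn_pos; auto. apply lt_0_INR; lia. Qed.

Lemma Hn_over_ln : Un_cv (fun N => Hn N / ln (INR N)) 1.
Proof.
  intros eps Heps. destruct (part1 eps Heps) as [N0 HN0]. exists (Nat.max N0 2). intros N HN.
  specialize (HN0 N ltac:(lia)). rewrite CN_eq in HN0 by lia.
  assert (0 < INR N) by (apply lt_0_INR; lia).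
  assert (0 < ln (INR N)).
  { rewrite <- ln_1. apply ln_increasing. lra. apply (lt_INR 1); lia. }
  replace (Hn N / ln (INR N)) with (Hn N / INR N / (ln (INR N) / INR N)) by (field; lra). auto.
Qed.

Lemma sum_inv_sq N : (1 <= N)%nat -> sumR (seq 1 N) (fun r => / INR r ^ 2) <= 2 - / INR N.
Proof.
  induction N; intros HN. lia. destruct N. simpl. unfold sumR; simpl. lra.
  rewrite seq_S, sumR_app, sumR_cons, sumR_nil. simpl (1 + S N)%nat.
  specialize (IHN ltac:(lia)).
  assert (P : 0 < INR (S N)) by (apply lt_0_INR; lia).
  rewrite (S_INR (S N)).
  assert (/ (INR (S N) + 1) ^ 2 <= / INR (S N) - / (INR (S N) + 1)).
  { replace (/ INR (S N) - / (INR (S N) + 1)) with (/ (INR (S N) * (INR (S N) + 1))) by (field; lra).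
    apply Rinv_le_contravar. apply Rmult_lt_0_compat; lra. replace ((INR (S N) + 1) ^ 2) with ((INR (S N) + 1) * (INR (S N) + 1)) by ring. nra. }
  lra.
Qed.

Definition BN (N : nat) (p q : list nat) : R := (PiN N p q - indb (leqb p q)) / CN N.

Lemma BN_cv n p q : In p (parts n) -> In q (parts n) -> Un_cv (fun N => BN N p q) (kQ p q).
Proof.
  intros Hp Hq. destruct (Tr_est n p Hp) as [K0 [K0p HK]].
  assert (Bound : forall N, (1 <= N)%nat -> Rabs (BN N p q - kQ p q) <= 2 * K0 / Hn N).
  { intros N HN.
    assert (PN : 0 < INR N) by (apply lt_0_INR; lia).
    assert (PH : 0 < Hn N) by (apply Hn_pos; auto).
    set (e := fun r => Tr r p q - indb (leqb p q) - kQ p q / INR r).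
    assert (E : PiN N p q - indb (leqb p q) = / INR N * (kQ p q * Hn N + sumR (seq 1 N) e)).
    { transitivity (sumR (seq 1 N) (fun r => probR N r * Tr r p q) - sumR (seq 1 N) (fun r => probR N r) * indb (leqb p q)).
      { unfold PiN. rewrite probR_sum by auto. ring. }
      rewrite <- sumR_scal_r, <- sumR_minus.
      unfold Hn. rewrite <- sumR_scal, <- sumR_plus, <- sumR_scal. apply sumR_ext.
      intros r Hr. apply in_seq in Hr. unfold probR.
      replace ((1 <=? r)%nat && (r <=? N)%nat)%bool with true.
      2:{ symmetry. apply andb_true_intro; split; apply Nat.leb_le; lia. }
      unfold e. field. split; apply not_0_INR; lia. }
    unfold BN. rewrite E, CN_eq by auto.
    replace (/ INR N * (kQ p q * Hn N + sumR (seq 1 N) e) / (Hn N / INR N) - kQ p q)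
      with (sumR (seq 1 N) e / Hn N) by (field; lra).
    unfold Rdiv. rewrite Rabs_mult, Rabs_inv, (Rabs_right (Hn N)) by lra.
    apply Rmult_le_compat_r. left; apply Rinv_0_lt_compat; lra.
    eapply Rle_trans. apply sumR_abs.
    apply Rle_trans with (sumR (seq 1 N) (fun r => K0 * / INR r ^ 2)).
    - apply sumR_le. intros r Hr. apply in_seq in Hr. apply HK; auto; lia.
    - rewrite sumR_scal. pose proof (sum_inv_sq N HN).
      assert (0 < / INR N) by (apply Rinv_0_lt_compat; lra). nra. }
  intros eps Heps.
  destruct (Hn_large (2 * K0 / eps)) as [N0 HN0]. exists (S N0). intros N HN. unfold Rdist.
  specialize (HN0 N ltac:(lia)). eapply Rle_lt_trans. apply Bound; lia.
  assert (0 < Hn N) by (apply Hn_pos; lia).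
  apply Rmult_lt_reg_r with (Hn N); auto. unfold Rdiv. rewrite Rmult_assoc, Rinv_l by lra.
  unfold Rdiv in HN0. apply Rmult_lt_compat_l with (r := eps) in HN0; auto.
  rewrite <- Rmult_assoc, (Rmult_comm eps), Rmult_assoc, Rinv_r, Rmult_1_r in HN0 by lra. lra.
Qed.

Lemma ln_pos N : (2 <= N)%nat -> 0 < ln (INR N).
Proof. intros. rewrite <- ln_1. apply ln_increasing. lra. apply (lt_INR 1); lia. Qed.

Lemma Int_part_nonneg x : 0 <= x -> (0 <= Int_part x)%Z.
Proof.
  intros. destruct (base_Int_part x) as [A B].
  assert (IZR (Int_part x) > -1) by lra. apply lt_IZR in H0. lia.
Qed.

Lemma gen_bounds N t : (2 <= N)%nat -> 0 <= t ->
  t * INR N / ln (INR N) - 1 < INR (gen_of N t) <= t * INR N / ln (INR N).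
Proof.
  intros HN Ht. unfold gen_of.
  assert (0 <= t * INR N / ln (INR N)).
  { apply Rdiv_le_0_compat. apply Rmult_le_pos; auto. apply pos_INR. apply ln_pos; auto. }
  pose proof (Int_part_nonneg _ H).
  rewrite (INR_IZR_INZ (Z.to_nat _)), Z2Nat.id by auto.
  destruct (base_Int_part (t * INR N / ln (INR N))). lra.
Qed.

Lemma Int_part_mono x y : x <= y -> (Int_part x <= Int_part y)%Z.
Proof.
  intros. destruct (base_Int_part x). destruct (base_Int_part y).
  assert (IZR (Int_part x) < IZR (Int_part y) + 1) by lra.
  rewrite <- plus_IZR in H4. apply lt_IZR in H4. lia.
Qed.

Lemma gen_mono N t t' : (2 <= N)%nat -> 0 <= t <= t' -> (gen_of N t <= gen_of N t')%nat.
Proof.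
  intros HN Ht. unfold gen_of. apply Z2Nat.inj_le.
  - apply Int_part_nonneg. apply Rdiv_le_0_compat. apply Rmult_le_pos; [lra|apply pos_INR]. apply ln_pos; auto.
  - apply Int_part_nonneg. apply Rdiv_le_0_compat. apply Rmult_le_pos; [lra|apply pos_INR]. apply ln_pos; auto.
  - apply Int_part_mono. unfold Rdiv. apply Rmult_le_compat_r. left; apply Rinv_0_lt_compat, ln_pos; auto.
    apply Rmult_le_compat_r. apply pos_INR. lra.
Qed.

Lemma gen_0 N : gen_of N 0 = 0%nat.
Proof.
  unfold gen_of. replace (0 * INR N / ln (INR N)) with (INR 0) by (simpl; unfold Rdiv; ring).
  rewrite Int_part_INR. reflexivity.
Qed.

Lemma mC_cv t1 t2 : 0 <= t1 <= t2 ->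
  Un_cv (fun N => INR (gen_of N t2 - gen_of N t1) * CN N) (t2 - t1).
Proof.
  intros Ht. intros eps Heps.
  destruct (Hn_over_ln (eps / 2 / (t2 - t1 + 1))) as [N1 HN1].
  { apply Rdiv_lt_0_compat; lra. }
  destruct (CN_cv0 (eps / 2)) as [N2 HN2]; [lra|].
  exists (Nat.max 2 (Nat.max N1 N2)). intros N HN. unfold Rdist.
  specialize (HN1 N ltac:(lia)). specialize (HN2 N ltac:(lia)). unfold Rdist in *.
  assert (N2' : (2 <= N)%nat) by lia.
  pose proof (gen_bounds N t1 N2' ltac:(lra)). pose proof (gen_bounds N t2 N2' ltac:(lra)).
  rewrite minus_INR by (apply gen_mono; auto; lra).
  assert (L : 0 < ln (INR N)) by (apply ln_pos; auto).
  assert (PN : 0 < INR N) by (apply lt_0_INR; lia).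
  pose proof (CN_pos N ltac:(lia)).
  rewrite Rminus_0_r, Rabs_right in HN2 by lra.
  set (x := INR N / ln (INR N)) in *.
  assert (Hx : x * CN N = Hn N / ln (INR N)).
  { unfold x. rewrite CN_eq by lia. field. split; lra. }
  replace (t1 * INR N / ln (INR N)) with (t1 * x) in * by (unfold x, Rdiv; ring).
  replace (t2 * INR N / ln (INR N)) with (t2 * x) in * by (unfold x, Rdiv; ring).
  set (d := INR (gen_of N t2) - INR (gen_of N t1)) in *.
  assert (Dd : Rabs (d - (t2 - t1) * x) <= 1).
  { apply Rabs_le. unfold d. lra. }
  replace (d * CN N - (t2 - t1)) with ((d - (t2 - t1) * x) * CN N + (t2 - t1) * (x * CN N - 1)) by ring.
  rewrite Hx. eapply Rle_lt_trans. apply Rabs_triang.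
  rewrite !Rabs_mult, (Rabs_right (CN N)) by lra.
  assert (Rabs (t2 - t1) * Rabs (Hn N / ln (INR N) - 1) <= (t2 - t1) * (eps / 2 / (t2 - t1 + 1))).
  { rewrite Rabs_right by lra. apply Rmult_le_compat_l; lra. }
  assert ((t2 - t1) * (eps / 2 / (t2 - t1 + 1)) < eps / 2).
  { unfold Rdiv. replace ((t2 - t1) * (eps * / 2 * / (t2 - t1 + 1))) with ((eps / 2) * ((t2 - t1) / (t2 - t1 + 1))) by (field; lra).
    assert (Q1 : (t2 - t1) / (t2 - t1 + 1) < 1).
    { apply Rmult_lt_reg_r with (t2 - t1 + 1); [lra|]. unfold Rdiv. rewrite Rmult_assoc, Rinv_l by lra. lra. }
    unfold Rdiv in Q1. nra. }
  assert (Rabs (d - (t2 - t1) * x) * CN N <= CN N) by nra.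
  lra.
Qed.

Fixpoint ff (x : R) (j : nat) : R :=
  match j with O => 1 | S j' => ff x j' * (x - INR j') end.

Definition bc (m j : nat) : R := ff (INR m) j / INR (fact j).

Lemma fact_pos j : 0 < INR (fact j).
Proof. apply lt_0_INR. apply lt_O_fact. Qed.

Lemma ff_S_shift x j : ff (x + 1) (S j) = (x + 1) * ff x j.
Proof.
  induction j. simpl. ring.
  change (ff (x + 1) (S (S j))) with (ff (x + 1) (S j) * (x + 1 - INR (S j))).
  rewrite IHj. simpl ff. rewrite S_INR. ring.
Qed.

Lemma bc_pascal m j : bc (S m) (S j) = bc m (S j) + bc m j.
Proof.
  unfold bc. rewrite S_INR, ff_S_shift. simpl ff. rewrite fact_simpl, mult_INR, S_INR.
  pose proof (fact_pos j). pose proof (pos_INR j). field. split; lra.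
Qed.

Lemma bc_0 m : bc m 0 = 1.
Proof. unfold bc. simpl. lra. Qed.

Lemma ff_zero m d : ff (INR m) (S m + d) = 0.
Proof.
  induction d. rewrite Nat.add_0_r. simpl. ring.
  replace (S m + S d)%nat with (S (S m + d)) by lia. simpl ff. simpl in IHd. rewrite IHd. ring.
Qed.

Lemma bc_zero m j : (m < j)%nat -> bc m j = 0.
Proof.
  intros H. unfold bc. replace j with (S m + (j - S m))%nat by lia. rewrite ff_zero. unfold Rdiv; ring.
Qed.

Lemma ff_bounds m j : 0 <= ff (INR m) j <= INR m ^ j.
Proof.
  induction j. simpl; lra.
  destruct (le_lt_dec j m).
  - simpl. assert (0 <= INR m - INR j <= INR m) by (pose proof (le_INR _ _ l); pose proof (pos_INR j); lra).
    split. apply Rmult_le_pos; lra. rewrite Rmult_comm. apply Rmult_le_compat; lra.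
  - replace (S j) with (S m + (j - m))%nat by lia. rewrite ff_zero. split. lra. apply pow_le, pos_INR.
Qed.

Fixpoint ffc (y c : R) (j : nat) : R :=
  match j with O => 1 | S j' => ffc y c j' * (y - INR j' * c) end.

Lemma ff_scal x c j : ff x j * c ^ j = ffc (x * c) c j.
Proof. induction j; simpl. ring. rewrite <- IHj. ring. Qed.

Lemma ffc_cv (y c : nat -> R) l : Un_cv y l -> Un_cv c 0 -> forall j, Un_cv (fun N => ffc (y N) (c N) j) (l ^ j).
Proof.
  intros Hy Hc. induction j; cbn [ffc].
  - intros eps He. exists 0%nat. intros. unfold Rdist. rewrite Rminus_diag, Rabs_R0; lra.
  - replace (l ^ S j) with (l ^ j * l) by (simpl; ring). apply CV_mult; auto.
    assert (Hk : Un_cv (fun _ : nat => INR j) (INR j)).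
    { intros eps He; exists 0%nat; intros; unfold Rdist; rewrite Rminus_diag, Rabs_R0; lra. }
    pose proof (CV_minus y (fun N => INR j * c N) l (INR j * 0) Hy (CV_mult _ _ _ _ Hk Hc)) as H.
    replace (l - INR j * 0) with l in H by ring. exact H.
Qed.

Lemma sumR_seq_shift0 k (f : nat -> R) : sumR (seq 0 (S k)) f = f 0%nat + sumR (seq 0 k) (fun j => f (S j)).
Proof. change (seq 0 (S k)) with (0%nat :: seq 1 k). rewrite sumR_cons, <- seq_shift, sumR_map. auto. Qed.

Lemma sumR_seq_last k (f : nat -> R) : sumR (seq 0 (S k)) f = sumR (seq 0 k) f + f k.
Proof. rewrite seq_S, sumR_app, sumR_cons, sumR_nil. simpl. ring. Qed.

Lemma binom_exp n (Pi B : list nat -> list nat -> R) (c : R) : c <> 0 ->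
  (forall p q, B p q = (Pi p q - indb (leqb p q)) / c) ->
  forall m p q, In p (parts n) ->
  mpow n Pi m p q = sumR (seq 0 (S m)) (fun j => bc m j * c ^ j * mpow n B j p q).
Proof.
  intros Hc HB. induction m; intros p q Hp.
  - cbn [mpow seq]. rewrite sumR_cons, sumR_nil, bc_0. change (mpow n B 0 p q) with (indb (leqb p q)). rewrite pow_O. ring.
  - cbn [mpow].
    rewrite sumR_ext with (g := fun s => indb (leqb p s) * mpow n Pi m s q + c * (B p s * mpow n Pi m s q)).
    2:{ intros s _. rewrite HB. field_simplify; auto. }
    rewrite sumR_plus, sumR_delta_leqb; auto. 2: apply NoDup_parts.
    rewrite sumR_scal.
    rewrite sumR_ext with (g := fun s => sumR (seq 0 (S m)) (fun j => bc m j * c ^ j * (B p s * mpow n B j s q))).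
    2:{ intros s Hs. rewrite IHm by auto. rewrite <- sumR_scal. apply sumR_ext; intros; ring. }
    rewrite sumR_swap, <- sumR_scal.
    rewrite sumR_ext with (g := fun j => bc m j * (c ^ (S j) * mpow n B (S j) p q)).
    2:{ intros j _. cbn [mpow]. rewrite <- !sumR_scal. simpl pow. apply sumR_ext; intros; ring. }
    rewrite IHm by auto.
    set (T := fun j => c ^ j * mpow n B j p q).
    transitivity (sumR (seq 0 (S m)) (fun j => bc m j * T j) + sumR (seq 0 (S m)) (fun j => bc m j * T (S j))).
    { f_equal. apply sumR_ext; intros; unfold T; ring. }
    transitivity (sumR (seq 0 (S (S m))) (fun j => bc (S m) j * T j)).
    2:{ apply sumR_ext; intros; unfold T; ring. }
    rewrite (sumR_seq_shift0 (S m)), (sumR_seq_shift0 m).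
    rewrite sumR_ext with (f := fun j => bc (S m) (S j) * T (S j)) (g := fun j => bc m (S j) * T (S j) + bc m j * T (S j)).
    2:{ intros; rewrite bc_pascal; ring. }
    rewrite sumR_plus, !bc_0. rewrite (sumR_seq_last m (fun j => bc m (S j) * T (S j))).
    rewrite bc_zero by lia. ring.
Qed.

Lemma sum_f_R0_sumR f k : sum_f_R0 f k = sumR (seq 0 (S k)) f.
Proof.
  induction k. cbn [sum_f_R0 seq]. rewrite sumR_cons, sumR_nil; ring.
  rewrite sumR_seq_last, <- IHk. simpl. ring.
Qed.

Lemma CV_sumR {X} (l : list X) (f : nat -> X -> R) g :
  (forall x, In x l -> Un_cv (fun N => f N x) (g x)) -> Un_cv (fun N => sumR l (f N)) (sumR l g).
Proof.
  induction l; intros H.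
  - rewrite sumR_nil. intros eps He. exists 0%nat. intros. unfold Rdist. rewrite sumR_nil, Rminus_diag, Rabs_R0; lra.
  - rewrite sumR_cons.
    apply Un_cv_ext with (fun N => f N a + sumR l (f N)).
    intros; rewrite sumR_cons; auto.
    apply CV_plus. apply H; left; auto. apply IHl; intros; apply H; right; auto.
Qed.

Lemma eventually_list {X} (l : list X) (P : X -> nat -> Prop) :
  (forall x, In x l -> exists N0, forall N, (N0 <= N)%nat -> P x N) ->
  exists N0, forall x N, In x l -> (N0 <= N)%nat -> P x N.
Proof.
  induction l; intros H. exists 0%nat. intros x N [].
  destruct (H a (or_introl eq_refl)) as [N1 H1].
  destruct IHl as [N2 H2]. intros; apply H; right; auto.
  exists (Nat.max N1 N2). intros x N [<-|Hx] HN. apply H1; lia. apply H2; auto; lia.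
Qed.

Lemma tannery (a : nat -> nat -> R) (A d : nat -> R) (M : nat -> nat) (l : R) :
  (forall j, Un_cv (fun N => a N j) (A j)) ->
  Un_cv (fun J => sum_f_R0 A J) l ->
  (exists N0, forall N j, (N0 <= N)%nat -> Rabs (a N j) <= d j) ->
  (forall eps, 0 < eps -> exists J0, forall J K, (J0 <= J)%nat -> (J <= K)%nat ->
       sumR (seq (S J) (K - J)) d < eps) ->
  (forall N j, (M N < j)%nat -> a N j = 0) ->
  Un_cv (fun N => sum_f_R0 (a N) (M N)) l.
Proof.
  intros Ha HA [N0 Hd] Htail HM eps Heps.
  destruct (Htail (eps / 3)) as [J1 HJ1]; [lra|].
  destruct (HA (eps / 3)) as [J2 HJ2]; [lra|].
  set (J := Nat.max J1 J2).
  assert (Hfin : Un_cv (fun N => sumR (seq 0 (S J)) (a N)) (sumR (seq 0 (S J)) A)).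
  { apply CV_sumR. intros; apply Ha. }
  destruct (Hfin (eps / 3)) as [N1 HN1]; [lra|].
  exists (Nat.max N0 N1). intros N HN. unfold Rdist.
  set (K := Nat.max J (M N)).
  assert (E1 : sum_f_R0 (a N) (M N) = sumR (seq 0 (S K)) (a N)).
  { rewrite sum_f_R0_sumR. unfold K. replace (S (Nat.max J (M N))) with (S (M N) + (Nat.max J (M N) - M N))%nat by lia.
    rewrite seq_app, sumR_app.
    assert (Z : sumR (seq (0 + S (M N)) (Nat.max J (M N) - M N)) (a N) = 0).
    { rewrite (sumR_ext _ _ (fun _ => 0)). apply sumR_zero. intros j Hj. apply in_seq in Hj. apply HM. lia. }
    rewrite Z; ring. }
  assert (E2 : sumR (seq 0 (S K)) (a N) = sumR (seq 0 (S J)) (a N) + sumR (seq (S J) (K - J)) (a N)).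
  { replace (S K) with (S J + (K - J))%nat by (unfold K; lia). rewrite seq_app, sumR_app. auto. }
  rewrite E1, E2.
  specialize (HN1 N ltac:(lia)). unfold Rdist in HN1.
  specialize (HJ2 J ltac:(unfold J; lia)). unfold Rdist in HJ2. rewrite sum_f_R0_sumR in HJ2.
  assert (Tl : Rabs (sumR (seq (S J) (K - J)) (a N)) < eps / 3).
  { eapply Rle_lt_trans. apply sumR_abs. eapply Rle_lt_trans; [|apply (HJ1 J K); unfold J, K; lia].
    apply sumR_le. intros; apply Hd; lia. }
  replace (sumR (seq 0 (S J)) (a N) + sumR (seq (S J) (K - J)) (a N) - l) with
    ((sumR (seq 0 (S J)) (a N) - sumR (seq 0 (S J)) A) + (sumR (seq 0 (S J)) A - l) + sumR (seq (S J) (K - J)) (a N)) by ring.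
  eapply Rle_lt_trans. apply Rabs_triang. eapply Rle_lt_trans. apply Rplus_le_compat_r, Rabs_triang. lra.
Qed.

Lemma exp_tail D : forall eps, 0 < eps -> exists J0, forall J K, (J0 <= J)%nat -> (J <= K)%nat ->
  sumR (seq (S J) (K - J)) (fun j => / INR (fact j) * D ^ j) < eps.
Proof.
  intros eps He. destruct (E1_cvg D (eps / 2)) as [J0 HJ0]; [lra|].
  exists J0. intros J K HJ HK.
  assert (E : sumR (seq (S J) (K - J)) (fun j => / INR (fact j) * D ^ j) = E1 D K - E1 D J).
  { unfold E1. rewrite !sum_f_R0_sumR. replace (S K) with (S J + (K - J))%nat by lia.
    rewrite seq_app, sumR_app, Nat.add_0_l. ring. }
  rewrite E. pose proof (HJ0 K ltac:(lia)). pose proof (HJ0 J HJ). unfold Rdist in *.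
  apply Rabs_def2 in H. apply Rabs_def2 in H0. lra.
Qed.

Lemma Un_cv_eventually (u v : nat -> R) l N0 :
  (forall N, (N0 <= N)%nat -> u N = v N) -> Un_cv v l -> Un_cv u l.
Proof.
  intros E H eps He. destruct (H eps He) as [N1 HN1]. exists (Nat.max N0 N1). intros N HN.
  rewrite E by lia. apply HN1. lia.
Qed.

Lemma Un_cv_const c : Un_cv (fun _ => c) c.
Proof. intros eps He; exists 0%nat; intros; unfold Rdist; rewrite Rminus_diag, Rabs_R0; lra. Qed.

Lemma mpow_B_cv n q : forall j p, In p (parts n) ->
  Un_cv (fun N => mpow n (BN N) j p q) (mpow n kQ j p q).
Proof.
  induction j; intros p Hp.
  - simpl. apply Un_cv_const.
  - cbn [mpow]. apply CV_sumR. intros s Hs. apply CV_mult. apply (BN_cv n); auto. apply IHj; auto.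
Qed.

Lemma mpow_bound n (B : list nat -> list nat -> R) K q : 0 <= K ->
  (forall p s, In p (parts n) -> In s (parts n) -> Rabs (B p s) <= K) ->
  forall j p, In p (parts n) -> Rabs (mpow n B j p q) <= (INR (length (parts n)) * K) ^ j.
Proof.
  intros K0 HK. induction j; intros p Hp.
  - simpl. unfold indb; destruct leqb; rewrite ?Rabs_R1, ?Rabs_R0; lra.
  - cbn [mpow]. eapply Rle_trans. apply sumR_abs.
    apply Rle_trans with (sumR (parts n) (fun _ => K * (INR (length (parts n)) * K) ^ j)).
    + apply sumR_le. intros s Hs. rewrite Rabs_mult. apply Rmult_le_compat; try apply Rabs_pos; auto.
    + rewrite sumR_const. simpl. lra.
Qed.

Lemma BN_bounded n : exists K N0, 0 <= K /\ forall N p s, (N0 <= N)%nat -> In p (parts n) -> In s (parts n) ->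
  Rabs (BN N p s) <= K.
Proof.
  set (K := 1 + sumR (parts n) (fun p => sumR (parts n) (fun s => Rabs (kQ p s)))).
  assert (HK : forall p s, In p (parts n) -> In s (parts n) -> Rabs (kQ p s) + 1 <= K).
  { intros p s Hp Hs. unfold K.
    assert (Rabs (kQ p s) <= sumR (parts n) (fun s => Rabs (kQ p s))) by
      (apply (sumR_single_le _ (fun s => Rabs (kQ p s))); auto; intros; apply Rabs_pos).
    assert (sumR (parts n) (fun s => Rabs (kQ p s)) <= sumR (parts n) (fun p => sumR (parts n) (fun s => Rabs (kQ p s)))) by
      (apply (sumR_single_le _ (fun p => sumR (parts n) (fun s => Rabs (kQ p s)))); auto; intros; apply sumR_nonneg; intros; apply Rabs_pos).
    lra. }
  assert (E : exists N0, forall p N, In p (parts n) -> (N0 <= N)%nat ->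
            forall s, In s (parts n) -> Rabs (BN N p s) <= K).
  { apply (eventually_list (parts n) (fun p N => forall s, In s (parts n) -> Rabs (BN N p s) <= K)).
    intros p Hp.
    destruct (eventually_list (parts n) (fun s N => Rabs (BN N p s) <= K)) as [N1 H1].
    - intros s Hs. destruct (BN_cv n p s Hp Hs 1) as [N2 H2]; [lra|]. exists N2. intros N HN.
      specialize (H2 N HN). unfold Rdist in H2.
      pose proof (Rabs_triang_inv (BN N p s) (kQ p s)). specialize (HK p s Hp Hs). lra.
    - exists N1. intros N HN s Hs. apply H1; auto. }
  destruct E as [N0 HN0]. exists K, N0. split.
  - unfold K. assert (0 <= sumR (parts n) (fun p => sumR (parts n) (fun s => Rabs (kQ p s)))); [|lra].
    apply sumR_nonneg; intros; apply sumR_nonneg; intros; apply Rabs_pos.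
  - intros N p s HN Hp Hs. apply HN0; auto.
Qed.

Section Main.
Variable n : nat.
Variable P : R -> list nat -> list nat -> R.
Hypothesis HP : forall t p q, 0 <= t -> Un_cv (kexp_partial n t p q) (P t p q).

Lemma mpow_cv t1 t2 p q : 0 <= t1 <= t2 -> In p (parts n) -> In q (parts n) ->
  Un_cv (fun N => mpow n (PiN N) (gen_of N t2 - gen_of N t1) p q) (P (t2 - t1) p q).
Proof.
  intros Ht Hp Hq.
  set (t := t2 - t1).
  set (m := fun N => (gen_of N t2 - gen_of N t1)%nat).
  set (a := fun N j => bc (m N) j * CN N ^ j * mpow n (BN N) j p q).
  apply Un_cv_eventually with (v := fun N => sum_f_R0 (a N) (m N)) (N0 := 1%nat).
  { intros N HN. rewrite sum_f_R0_sumR. unfold a. apply (binom_exp n (PiN N) (BN N) (CN N)); auto.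
    pose proof (CN_pos N HN); lra. }
  destruct (BN_bounded n) as [K [N1 [K0 HK]]].
  set (L := INR (length (parts n))).
  assert (L0 : 0 <= L) by apply pos_INR.
  set (D := (t + 1) * (L * K)).
  assert (Hm : Un_cv (fun N => INR (m N) * CN N) t) by (apply mC_cv; auto).
  destruct (Hm 1) as [N2 HN2]; [lra|].
  apply (tannery a (fun j => t ^ j / INR (fact j) * kQpow n j p q) (fun j => / INR (fact j) * D ^ j) m).
  - intros j. unfold a.
    apply Un_cv_eventually with (v := fun N => (ffc (INR (m N) * CN N) (CN N) j * / INR (fact j)) * mpow n (BN N) j p q) (N0 := 0%nat).
    { intros N _. unfold bc. rewrite <- ff_scal. unfold Rdiv. ring. }
    rewrite kQpow_mpow. apply CV_mult; [|apply mpow_B_cv; auto].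
    unfold Rdiv. apply CV_mult. apply ffc_cv; auto. apply CN_cv0. apply Un_cv_const.
  - apply HP. unfold t; lra.
  - exists (Nat.max 1 (Nat.max N1 N2)). intros N j HN. unfold a.
    specialize (HN2 N ltac:(lia)). unfold Rdist in HN2.
    assert (Cp : 0 < CN N) by (apply CN_pos; lia).
    assert (mC0 : 0 <= INR (m N) * CN N) by (apply Rmult_le_pos; [apply pos_INR|lra]).
    assert (mC1 : INR (m N) * CN N <= t + 1) by (apply Rabs_def2 in HN2; lra).
    rewrite !Rabs_mult.
    assert (B1 : Rabs (bc (m N) j) * Rabs (CN N ^ j) <= (t + 1) ^ j * / INR (fact j)).
    { rewrite <- Rabs_mult. unfold bc. pose proof (ff_bounds (m N) j). pose proof (fact_pos j).
      rewrite Rabs_right.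
      2:{ apply Rle_ge. apply Rmult_le_pos. apply Rdiv_le_0_compat; lra. apply pow_le; lra. }
      replace (ff (INR (m N)) j / INR (fact j) * CN N ^ j) with (ff (INR (m N)) j * CN N ^ j * / INR (fact j)) by (unfold Rdiv; ring).
      apply Rmult_le_compat_r. left; apply Rinv_0_lt_compat; lra.
      apply Rle_trans with (INR (m N) ^ j * CN N ^ j). apply Rmult_le_compat_r. apply pow_le; lra. lra.
      rewrite <- Rpow_mult_distr. apply pow_incr. lra. }
    assert (B2 : Rabs (mpow n (BN N) j p q) <= (L * K) ^ j).
    { apply mpow_bound; auto. intros; apply HK; auto. lia. }
    unfold D. rewrite Rpow_mult_distr.
    apply Rle_trans with (((t + 1) ^ j * / INR (fact j)) * (L * K) ^ j).
    + apply Rmult_le_compat; auto. apply Rmult_le_pos; apply Rabs_pos. apply Rabs_pos.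
    + right. ring.
  - apply exp_tail.
  - intros N j Hj. unfold a. rewrite bc_zero by auto. ring.
Qed.

Lemma times_sorted N : (2 <= N)%nat -> forall obs t0, 0 <= t0 -> times_ok t0 obs ->
  sortedg (gen_of N) (gen_of N t0) obs.
Proof.
  intros HN. induction obs as [|[t pi] obs IH]; intros t0 Ht0 T; simpl in *; auto.
  destruct T as [T1 T2]. split. apply gen_mono; auto. apply IH; auto. lra.
Qed.

Lemma kfddM_cv : forall obs t0 p, 0 <= t0 -> times_ok t0 obs -> In p (parts n) ->
  Forall (fun o => In (snd o) (parts n)) obs ->
  Un_cv (fun N => kfddM n N (gen_of N) (gen_of N t0) p obs) (kfdd P t0 p obs).
Proof.
  induction obs as [|[t pi] obs IH]; intros t0 p Ht0 T Hp Fa; simpl.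
  - apply Un_cv_const.
  - destruct T as [T1 T2]. inversion Fa; subst. simpl in H1.
    apply CV_mult. apply mpow_cv; auto. apply IH; auto. lra.
Qed.

End Main.

Theorem mainTheorem18 :
  Un_cv (fun N => CN N / (ln (INR N) / INR N)) 1 /\
  forall (n : nat) (r0 : nat -> nat),
    (forall N : nat, (n <= N)%nat -> (n <= r0 N <= N)%nat) ->
    forall P : R -> list nat -> list nat -> R,
    (forall t p q, 0 <= t -> Un_cv (kexp_partial n t p q) (P t p q)) ->
    forall obs : list (R * list nat),
      times_ok 0 obs ->
      Forall (fun o => In (snd o) (parts n)) obs ->
      Un_cv (fun N => wf_fdd N n (r0 N) obs) (kfdd P 0 (singletons n) obs).
Proof.
  split. apply part1.
  intros n r0 Hr0 P HP obs T Fa.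
  apply Un_cv_eventually with (v := fun N => kfddM n N (gen_of N) (gen_of N 0) (singletons n) obs) (N0 := Nat.max 2 n).
  - intros N HN. rewrite gen_0. apply wf_fdd_kfddM; auto. lia. apply Hr0; lia.
    rewrite <- (gen_0 N). apply times_sorted; auto; lia || lra.
  - apply kfddM_cv; auto. lra. apply singletons_in_parts.
Qed.
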